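(* Let $K$ be a convex domain, with supplementary angle function $\Omega$ on $\partial K$ and $\Omega_K=\max_{\partial K}\Omega$. Then: (i) if $\Omega_K<\pi/2$, then $h_K>0$; (ii) if $\Omega(\zeta)>\pi/2$ for some $\zeta\in\partial K$, then $h_K=0$; (iii) if $\Omega_K=\pi/2$ and every boundary point $\zeta$ with $\Omega(\zeta)=\pi/2$ is a vertex at which two straight line segments of $\partial K$ meet (i.e. in some neighborhood of $\zeta$ the boundary arc preceding $\zeta$ and the boundary arc following $\zeta$ are both straight line segments, necessarily orthogonal), then $h_K>0$; (iv) if $\Omega_K=\pi/2$ and there is a point $\zeta\in\partial K$ with $\Omega(\zeta)=\pi/2$ such that in every neighborhood of $\zeta$ the boundary arc preceding $\zeta$ or the boundary arc following $\zeta$ fails to be a straight line segment, then $h_K=0$.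
   Context: A convex domain is a compact convex subset $K\subset\mathbb{C}$ with nonempty interior. A unit vector $\nu$ is an outer normal to $K$ at $\zeta\in\partial K$ if $\mathrm{Re}((z-\zeta)\overline{\nu})\le 0$ for all $z\in K$. The set of arguments of outer normals at $\zeta$ is a closed arc of the circle; the supplementary angle $\Omega(\zeta)\in[0,\pi)$ is the length of this arc (equivalently, the jump $\alpha_+-\alpha_-$ of the tangent direction at $\zeta$, i.e. $\pi$ minus the interior angle of $K$ at $\zeta$), and $\Omega_K:=\max_{\zeta\in\partial K}\Omega(\zeta)$. For an outer unit normal $\nu$ at $\zeta$, $(\zeta+\nu\mathbb{R})\cap K=[\zeta,\zeta-h\nu]$ with $h\ge0$; the local depth $h_K(\zeta)$ is the maximum of such $h$ over all outer unit normals at $\zeta$, and the depth is $h_K:=\inf_{\zeta\in\partial K}h_K(\zeta)$. *)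

(* Defs.v *)
(* the plane C is modelled as R*R (Euclidean plane). *)
From Stdlib Require Import Reals Lra Classical ClassicalEpsilon.
Open Scope R_scope.

Definition pt := (R * R)%type.
Definition padd (p q : pt) : pt := (fst p + fst q, snd p + snd q).
Definition psub (p q : pt) : pt := (fst p - fst q, snd p - snd q).
Definition pscale (t : R) (p : pt) : pt := (t * fst p, t * snd p).
(* Re (z * conj w) = Euclidean inner product *)
Definition dot (p q : pt) : R := fst p * fst q + snd p * snd q.
Definition pnorm (p : pt) : R := sqrt (dot p p).
Definition dist (p q : pt) : R := pnorm (psub p q).

(* The least upper bound of E if it exists, 0 otherwise. *)
Definition sup_of (E : R -> Prop) : R :=
  match excluded_middle_informative (exists l, is_lub E l) with
  | left H => proj1_sig (constructive_indefinite_description _ H)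
  | right _ => 0
  end.
Definition inf_of (E : R -> Prop) : R := - sup_of (fun x => E (- x)).

Definition interior (K : pt -> Prop) (p : pt) : Prop :=
  exists r, 0 < r /\ forall q, dist q p < r -> K q.
Definition closed_set (K : pt -> Prop) : Prop :=
  forall p, ~ K p -> exists r, 0 < r /\ forall q, dist q p < r -> ~ K q.
Definition bounded_set (K : pt -> Prop) : Prop :=
  exists M, forall p, K p -> pnorm p <= M.
Definition convex_set (K : pt -> Prop) : Prop :=
  forall p q t, K p -> K q -> 0 <= t <= 1 ->
    K (padd (pscale (1 - t) p) (pscale t q)).

Definition convex_domain (K : pt -> Prop) : Prop :=
  closed_set K /\ bounded_set K /\ convex_set K /\ exists p, interior K p.

Definition boundary (K : pt -> Prop) (z : pt) : Prop := K z /\ ~ interior K z.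

Definition outer_normal (K : pt -> Prop) (zeta nu : pt) : Prop :=
  pnorm nu = 1 /\ forall z, K z -> dot (psub z zeta) nu <= 0.

(* Omega(zeta): length of the closed arc of arguments of outer normals,
   i.e. the supremum of lengths t2 - t1 of intervals [t1,t2] of arguments
   all of which are arguments of outer normals. *)
Definition Omega (K : pt -> Prop) (zeta : pt) : R :=
  sup_of (fun l => exists t1 t2, t1 <= t2 /\ l = t2 - t1 /\
            forall t, t1 <= t <= t2 -> outer_normal K zeta (cos t, sin t)).

Definition Omega_K (K : pt -> Prop) : R :=
  sup_of (fun w => exists zeta, boundary K zeta /\ w = Omega K zeta).

Definition normal_chord (K : pt -> Prop) (zeta : pt) (h : R) : Prop :=
  exists nu, outer_normal K zeta nu /\ 0 <= h /\
    forall t, K (padd zeta (pscale t nu)) <-> (- h <= t <= 0).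

Definition local_depth (K : pt -> Prop) (zeta : pt) : R :=
  sup_of (normal_chord K zeta).

Definition depth (K : pt -> Prop) : R :=
  inf_of (fun h => exists zeta, boundary K zeta /\ h = local_depth K zeta).

Definition two_segment_vertex (K : pt -> Prop) (zeta : pt) : Prop :=
  exists r u v, 0 < r /\ pnorm u = 1 /\ pnorm v = 1 /\
    forall p, dist p zeta < r ->
      (boundary K p <->
        exists s, 0 <= s /\ (p = padd zeta (pscale s u) \/ p = padd zeta (pscale s v))).

(* Main.v *)
Require Import Defs.
From Stdlib Require Import Reals.
Open Scope R_scope.
From Stdlib Require Import Lra Lia Psatz Classical ClassicalEpsilon.
Require Import Defs.

Lemma pt_eq (p q : pt) : fst p = fst q -> snd p = snd q -> p = q.
Proof. destruct p, q; simpl; intros; subst; reflexivity. Qed.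

Lemma pnorm1 (nu : pt) : pnorm nu = 1 <-> dot nu nu = 1.
Proof.
  unfold pnorm, dot. split; intro H.
  - assert (0 <= fst nu * fst nu + snd nu * snd nu) by nra.
    rewrite <- (sqrt_sqrt _ H0), H; ring.
  - rewrite H; apply sqrt_1.
Qed.

Lemma dist_lt (p q : pt) r : 0 < r -> dot (psub p q) (psub p q) < r * r -> dist p q < r.
Proof.
  intros Hr H. unfold dist, pnorm.
  assert (0 <= dot (psub p q) (psub p q)) by (unfold dot; nra).
  rewrite <- (sqrt_Rsqr r) by lra. apply sqrt_lt_1_alt. unfold Rsqr; lra.
Qed.

Lemma dist_lt_inv (p q : pt) r : dist p q < r -> dot (psub p q) (psub p q) < r * r.
Proof.
  intros H. unfold dist, pnorm in H.
  assert (0 <= dot (psub p q) (psub p q)) by (unfold dot; nra).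
  pose proof (sqrt_pos (dot (psub p q) (psub p q))).
  rewrite <- (sqrt_sqrt _ H0). nra.
Qed.

Lemma dist_le_inv (p q : pt) r : dist p q <= r -> dot (psub p q) (psub p q) <= r * r.
Proof.
  intros H. unfold dist, pnorm in H.
  assert (0 <= dot (psub p q) (psub p q)) by (unfold dot; nra).
  pose proof (sqrt_pos (dot (psub p q) (psub p q))).
  rewrite <- (sqrt_sqrt _ H0). nra.
Qed.

Lemma sup_of_lub (E : R -> Prop) : (exists l, is_lub E l) -> is_lub E (sup_of E).
Proof.
  intros H. unfold sup_of. destruct excluded_middle_informative as [H'|H'].
  - destruct constructive_indefinite_description; auto.
  - contradiction.
Qed.

Lemma sup_of_none (E : R -> Prop) : ~ (exists l, is_lub E l) -> sup_of E = 0.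
Proof.
  intros H. unfold sup_of. destruct excluded_middle_informative as [H'|H']; [contradiction|auto].
Qed.

Lemma lub_unique E a b : is_lub E a -> is_lub E b -> a = b.
Proof. intros [Ha1 Ha2] [Hb1 Hb2]. apply Rle_antisym; auto. Qed.

Lemma lub_exists E M x : (forall y, E y -> y <= M) -> E x -> exists l, is_lub E l.
Proof.
  intros HM Hx. destruct (completeness E) as [l Hl].
  - exists M. intros y Hy; auto.
  - exists x; auto.
  - exists l; auto.
Qed.

Lemma lub_nonempty E l : is_lub E l -> exists x, E x.
Proof.
  intros [H1 H2]. apply NNPP; intro Hn.
  assert (l <= l - 1). { apply H2. intros y Hy. exfalso; apply Hn; eauto. }
  lra.
Qed.

Lemma sup_of_ge E x M : (forall y, E y -> y <= M) -> E x -> x <= sup_of E.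
Proof.
  intros HM Hx. destruct (sup_of_lub E (lub_exists E M x HM Hx)) as [H1 _]. auto.
Qed.

Lemma sup_of_le E b : 0 <= b -> (forall y, E y -> y <= b) -> sup_of E <= b.
Proof.
  intros Hb H. destruct (classic (exists l, is_lub E l)) as [Hl|Hl].
  - destruct (sup_of_lub E Hl) as [_ H2]. apply H2. intros y Hy; auto.
  - rewrite sup_of_none; auto.
Qed.

Lemma sup_of_gt E x : x >= 0 -> sup_of E > x -> exists y, E y /\ y > x.
Proof.
  intros Hx H. destruct (classic (exists l, is_lub E l)) as [Hl|Hl].
  - destruct (sup_of_lub E Hl) as [H1 H2]. apply NNPP; intro Hn.
    assert (sup_of E <= x). { apply H2. intros y Hy. apply Rnot_lt_le. intro; apply Hn; eauto. }
    lra.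
  - rewrite sup_of_none in H; auto. lra.
Qed.

Lemma Rabs_le_inv a b : Rabs a <= b -> - b <= a /\ a <= b.
Proof.
  intros H. pose proof (Rle_abs a). pose proof (Rle_abs (-a)). rewrite Rabs_Ropp in H1. lra.
Qed.

Lemma my_choice {A B : Type} (P : A -> B -> Prop) : (forall a, exists b, P a b) -> exists f, forall a, P a (f a).
Proof.
  intros H. exists (fun a => proj1_sig (constructive_indefinite_description _ (H a))).
  intros a. destruct constructive_indefinite_description; auto.
Qed.

Lemma dot_psub_self p : dot (psub p p) (psub p p) = 0.
Proof. unfold dot, psub; simpl; ring. Qed.

Section Geo.
Variable K : pt -> Prop.
Hypothesis HK : convex_domain K.

Lemma Kclosed : closed_set K. Proof. apply HK. Qed.

Lemma Kconv p q l w : K p -> K q -> 0 <= l <= 1 ->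
  fst w = (1 - l) * fst p + l * fst q -> snd w = (1 - l) * snd p + l * snd q -> K w.
Proof.
  intros Hp Hq Hl H1 H2. destruct HK as (_ & _ & Hc & _).
  replace w with (padd (pscale (1 - l) p) (pscale l q)).
  - apply Hc; auto.
  - apply pt_eq; simpl; lra.
Qed.

Lemma Kbound : exists M, 0 < M /\ forall p, K p -> Rabs (fst p) <= M /\ Rabs (snd p) <= M.
Proof.
  destruct HK as (_ & [M HM] & _ & _). exists (Rmax M 1). split.
  - pose proof (Rmax_r M 1); lra.
  - intros p Hp. specialize (HM p Hp). unfold pnorm, dot in HM.
    pose proof (sqrt_pos (fst p * fst p + snd p * snd p)).
    assert (Hs: sqrt (fst p * fst p + snd p * snd p) * sqrt (fst p * fst p + snd p * snd p)
              = fst p * fst p + snd p * snd p) by (apply sqrt_sqrt; nra).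
    pose proof (Rmax_l M 1). pose proof (Rmax_r M 1).
    split; apply Rabs_le; split; nra.
Qed.

Lemma Kball : exists c rho, 0 < rho /\
  forall q, dot (psub q c) (psub q c) < rho * rho -> K q.
Proof.
  destruct HK as (_ & _ & _ & [c [r [Hr H]]]). exists c, r. split; auto.
  intros q Hq. apply H. apply dist_lt; auto.
Qed.

Lemma normal_strict z nu c rho : outer_normal K z nu -> 0 < rho ->
  (forall q, dot (psub q c) (psub q c) < rho * rho -> K q) ->
  dot (psub c z) nu <= - (rho / 2).
Proof.
  intros [Hn Hnz] Hr Hb. apply pnorm1 in Hn.
  set (q := padd c (pscale (rho/2) nu)).
  assert (Kq : K q). { apply Hb. unfold q, psub, padd, pscale, dot in *; simpl in *. nra. }
  specialize (Hnz q Kq). unfold q, psub, padd, pscale, dot in *; simpl in *. nra.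
Qed.

Lemma no_opp_normals z nu mu : outer_normal K z nu -> outer_normal K z mu ->
  dot nu mu = -1 -> False.
Proof.
  intros H1 H2 Hd. destruct Kball as (c & rho & Hr & Hb).
  pose proof (normal_strict _ _ _ _ H1 Hr Hb) as A1.
  pose proof (normal_strict _ _ _ _ H2 Hr Hb) as A2.
  destruct H1 as [N1 _]; destruct H2 as [N2 _]. apply pnorm1 in N1; apply pnorm1 in N2.
  unfold dot, psub in *; simpl in *.
  assert (Hz: Rsqr (fst nu + fst mu) + Rsqr (snd nu + snd mu) = 0) by (unfold Rsqr; nra).
  apply Rplus_sqr_eq_0 in Hz. destruct Hz as [E1 E2].
  assert (E1': fst mu = - fst nu) by lra. assert (E2': snd mu = - snd nu) by lra.
  rewrite E1', E2' in A2. nra.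
Qed.

Lemma normal_not_interior z nu : outer_normal K z nu -> ~ interior K z.
Proof.
  intros [Hn Hnz] [r [Hr Hb]]. apply pnorm1 in Hn.
  set (q := padd z (pscale (r/2) nu)).
  assert (Kq : K q). { apply Hb. apply dist_lt; auto. unfold q, psub, padd, pscale, dot in *; simpl in *. nra. }
  specialize (Hnz q Kq). unfold q, psub, padd, pscale, dot in *; simpl in *. nra.
Qed.

Lemma chord_le z nu h M : pnorm nu = 1 -> (forall p, K p -> Rabs (fst p) <= M /\ Rabs (snd p) <= M) ->
  K z -> K (padd z (pscale (-h) nu)) -> 0 <= h -> h <= 3 * M.
Proof.
  intros Hn HM H1 H2 Hh. apply pnorm1 in Hn. destruct (HM _ H1) as [A1 A2]. destruct (HM _ H2) as [B1 B2].
  unfold padd, pscale, dot in *; simpl in *.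
  apply Rabs_le_inv in A1, A2, B1, B2.
  assert (M >= 0) by lra.
  nra.
Qed.



Lemma chord_of_normal z h M : (forall p, K p -> Rabs (fst p) <= M /\ Rabs (snd p) <= M) ->
  normal_chord K z h -> h <= 3 * M.
Proof.
  intros HM (nu & [Hn Hnz] & Hh & Hc).
  assert (K (padd z (pscale (-h) nu))) by (apply Hc; lra).
  assert (K (padd z (pscale 0 nu))) by (apply Hc; lra).
  replace (padd z (pscale 0 nu)) with z in H0 by (apply pt_eq; simpl; ring).
  eapply chord_le; eauto.
Qed.

Lemma ld_nonneg z : 0 <= local_depth K z.
Proof.
  unfold local_depth. destruct (classic (exists l, is_lub (normal_chord K z) l)) as [Hl|Hl].
  - pose proof (sup_of_lub _ Hl) as H. destruct (lub_nonempty _ _ H) as [x Hx].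
    destruct H as [H1 _]. pose proof (H1 x Hx). destruct Hx as (nu & _ & Hx & _). lra.
  - rewrite sup_of_none; auto; lra.
Qed.

Lemma ld_ge z h : normal_chord K z h -> h <= local_depth K z.
Proof.
  intros Hh. destruct Kbound as (M & HM0 & HM). unfold local_depth.
  apply sup_of_ge with (3 * M); auto.
  intros y Hy. eapply chord_of_normal; eauto.
Qed.

Lemma ld_le z e : 0 <= e ->
  (forall nu h, outer_normal K z nu -> 0 <= h -> K (padd z (pscale (-h) nu)) -> h <= e) ->
  local_depth K z <= e.
Proof.
  intros He H. unfold local_depth. apply sup_of_le; auto.
  intros y (nu & Hn & Hy & Hc). apply (H nu); auto. apply Hc; lra.
Qed.

Lemma chord_exists z nu : K z -> outer_normal K z nu ->
  exists h, 0 <= h /\ forall t, K (padd z (pscale t nu)) <-> (- h <= t <= 0).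
Proof.
  intros Kz Hnu. destruct Kbound as (M & HM0 & HM).
  pose proof Hnu as [Hn Hnz]. pose proof Hn as Hn'. apply pnorm1 in Hn'.
  set (S := fun s => 0 <= s /\ K (padd z (pscale (-s) nu))).
  assert (HS0 : S 0). { split; [lra|]. replace (padd z (pscale (-0) nu)) with z; auto. apply pt_eq; simpl; ring. }
  assert (SB : forall s, S s -> s <= 3 * M). { intros s [Hs Ks]. exact (chord_le z nu s M Hn HM Kz Ks Hs). }
  destruct (lub_exists S _ 0 SB HS0) as [h [Hh1 Hh2]].
  assert (h0 : 0 <= h) by (apply Hh1; auto).
  assert (Kh : K (padd z (pscale (-h) nu))).
  { apply NNPP; intro Hn0. destruct (Kclosed _ Hn0) as (r & Hr & Hb).
    destruct (classic (exists s, S s /\ h - r / 2 < s)) as [[s [Ss Hs]]|Hno].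
    - assert (s <= h) by (apply Hh1; auto). apply (Hb (padd z (pscale (-s) nu))); [|apply Ss].
      apply dist_lt; auto. unfold psub, padd, pscale, dot in *; simpl in *.
      replace ((fst z + - s * fst nu - (fst z + - h * fst nu)) * (fst z + - s * fst nu - (fst z + - h * fst nu)) +
        (snd z + - s * snd nu - (snd z + - h * snd nu)) * (snd z + - s * snd nu - (snd z + - h * snd nu)))
       with ((h - s) * (h - s) * (fst nu * fst nu + snd nu * snd nu)) by ring.
      rewrite Hn'. nra.
    - assert (h <= h - r / 2). { apply Hh2. intros y Hy. apply Rnot_lt_le. intro; apply Hno; eauto. }
      lra. }
  exists h. split; auto. intro t. split.
  - intros Kt. destruct (Rle_dec t 0) as [Ht|Ht].
    + split; auto. assert (-t <= h). { apply Hh1. split; [lra|]. replace (pscale (- - t) nu) with (pscale t nu); auto.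
        apply pt_eq; simpl; ring. } lra.
    + exfalso. specialize (Hnz _ Kt). unfold psub, padd, pscale, dot in *; simpl in *. nra.
  - intros [Ht1 Ht2]. destruct (Req_dec h 0) as [H0|H0].
    + assert (t = 0) by lra. subst. replace (padd z (pscale 0 nu)) with z; auto. apply pt_eq; simpl; ring.
    + apply (Kconv z (padd z (pscale (-h) nu)) (-t / h)); auto.
      * split. apply Rmult_le_pos; [lra| apply Rlt_le, Rinv_0_lt_compat; lra].
        apply (Rmult_le_reg_r h); [lra|]. unfold Rdiv. rewrite Rmult_assoc, Rinv_l; lra.
      * simpl. field; auto.
      * simpl. field; auto.
Qed.

End Geo.

Section Geo2.
Variable K : pt -> Prop.
Hypothesis HK : convex_domain K.

Lemma closed_limit p : (forall r, 0 < r -> exists q, K q /\ dot (psub q p) (psub q p) < r * r) -> K p.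
Proof.
  intros H. apply NNPP; intro Hn. destruct (Kclosed K HK _ Hn) as (r & Hr & Hb).
  destruct (H r Hr) as (q & Kq & Hq). apply (Hb q); auto. apply dist_lt; auto.
Qed.

Lemma depth_zero : (forall e, e > 0 -> exists z, boundary K z /\ local_depth K z <= e) -> depth K = 0.
Proof.
  intros H. unfold depth, inf_of.
  set (E := fun x => exists zeta, boundary K zeta /\ - x = local_depth K zeta).
  assert (L : is_lub E 0).
  { split.
    - intros x (z & _ & Hz). pose proof (ld_nonneg K z). lra.
    - intros b Hb. apply Rnot_lt_le; intro Hlt.
      destruct (H (- b / 2)) as (z & Bz & Hz). lra.
      assert (E (- local_depth K z)). { exists z; split; auto; ring. }
      specialize (Hb _ H0). lra. }
  assert (Ex : exists l, is_lub E l) by eauto.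
  rewrite (lub_unique _ _ _ (sup_of_lub _ Ex) L). ring.
Qed.

Lemma depth_pos : (exists z, boundary K z) ->
  (exists d, d > 0 /\ forall z, boundary K z -> d <= local_depth K z) -> depth K > 0.
Proof.
  intros [z0 Bz0] (d & Hd & H). unfold depth, inf_of.
  set (E := fun x => exists zeta, boundary K zeta /\ - x = local_depth K zeta).
  assert (Ex : exists l, is_lub E l).
  { apply (lub_exists E (- d) (- local_depth K z0)).
    - intros y (z & Bz & Hz). specialize (H z Bz). lra.
    - exists z0; split; auto; ring. }
  destruct (sup_of_lub _ Ex) as [_ H2].
  assert (sup_of E <= - d). { apply H2. intros y (z & Bz & Hz). specialize (H z Bz). lra. }
  lra.
Qed.

Lemma line_min b0 d : dot d d > 0 ->
  (exists X, K (padd b0 (pscale X d))) ->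
  (exists L, forall X, K (padd b0 (pscale X d)) -> L <= X) ->
  exists X0, K (padd b0 (pscale X0 d)) /\ (forall X, K (padd b0 (pscale X d)) -> X0 <= X) /\
    boundary K (padd b0 (pscale X0 d)).
Proof.
  intros Hd [X1 HX1] [L HL].
  set (T := fun y => K (padd b0 (pscale (- y) d))).
  assert (T1 : T (- X1)). { unfold T. rewrite Ropp_involutive; auto. }
  assert (TB : forall y, T y -> y <= - L). { intros y Hy. specialize (HL _ Hy). lra. }
  destruct (lub_exists T _ _ TB T1) as [m [Hm1 Hm2]].
  assert (KX : K (padd b0 (pscale (- m) d))).
  { apply closed_limit. intros r Hr.
    set (eta := r / 2 / (1 + dot d d)).
    assert (Heta : 0 < eta) by (unfold eta; apply Rdiv_lt_0_compat; lra).
    destruct (classic (exists y, T y /\ m - eta < y)) as [[y [Ty Hy]]|Hno].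
    - exists (padd b0 (pscale (- y) d)). split; auto.
      assert (y <= m) by (apply Hm1; auto).
      unfold psub, padd, pscale, dot in *; simpl in *.
      replace ((fst b0 + - y * fst d - (fst b0 + - m * fst d)) * (fst b0 + - y * fst d - (fst b0 + - m * fst d)) +
        (snd b0 + - y * snd d - (snd b0 + - m * snd d)) * (snd b0 + - y * snd d - (snd b0 + - m * snd d)))
        with ((m - y) * (m - y) * (fst d * fst d + snd d * snd d)) by ring.
      assert (E1 : eta * (1 + (fst d * fst d + snd d * snd d)) = r / 2) by (unfold eta, dot; field; lra).
      set (D := fst d * fst d + snd d * snd d) in *.
      assert (D0 : 0 <= D) by (unfold D; nra).
      assert (A1 : (m - y) * (m - y) * D <= eta * eta * D) by (apply Rmult_le_compat_r; nra).
      assert (A2 : eta * eta * D <= (eta * (1 + D)) * (eta * (1 + D))) by nra.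
      rewrite E1 in A2. nra.
    - assert (m <= m - eta). { apply Hm2. intros y Hy. apply Rnot_lt_le. intro; apply Hno; eauto. }
      lra. }
  exists (- m). split; auto. split.
  - intros X HX. assert (T (- X)) by (unfold T; rewrite Ropp_involutive; auto).
    specialize (Hm1 _ H). lra.
  - split; auto. intros [r [Hr Hb]].
    set (eta := r / 2 / (1 + dot d d)).
    assert (Heta : 0 < eta) by (unfold eta; apply Rdiv_lt_0_compat; lra).
    assert (Kq : K (padd b0 (pscale (- (m + eta)) d))).
    { apply Hb. apply dist_lt; auto.
      unfold psub, padd, pscale, dot in *; simpl in *.
      replace ((fst b0 + - (m + eta) * fst d - (fst b0 + - m * fst d)) * (fst b0 + - (m + eta) * fst d - (fst b0 + - m * fst d)) +
        (snd b0 + - (m + eta) * snd d - (snd b0 + - m * snd d)) * (snd b0 + - (m + eta) * snd d - (snd b0 + - m * snd d)))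
        with (eta * eta * (fst d * fst d + snd d * snd d)) by ring.
      assert (eta * (1 + (fst d * fst d + snd d * snd d)) = r / 2) by (unfold eta, dot; field; lra).
      nra. }
    assert (m + eta <= m) by (apply Hm1; exact Kq). lra.
Qed.

Lemma boundary_exists : exists z, boundary K z.
Proof.
  destruct (Kball K HK) as (c & rho & Hr & Hb). destruct (Kbound K HK) as (M & HM0 & HM).
  destruct (line_min c (1, 0)) as (X0 & _ & _ & B).
  - unfold dot; simpl; lra.
  - exists 0. apply Hb. unfold psub, padd, pscale, dot; simpl. nra.
  - exists (- M - fst c). intros X HX. destruct (HM _ HX) as [H1 _]. apply Rabs_le_inv in H1.
    simpl in H1. lra.
  - eauto.
Qed.

Definition unitv (t : R) : pt := (cos t, sin t).

Definition normal_interval (z : pt) (t1 t2 : R) : Prop :=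
  t1 <= t2 /\ forall t, t1 <= t <= t2 -> outer_normal K z (cos t, sin t).

Lemma interval_lt_pi z t1 t2 : normal_interval z t1 t2 -> t2 - t1 < PI.
Proof.
  intros [H12 H]. apply Rnot_le_lt; intro Hle.
  apply (no_opp_normals K HK z (cos t1, sin t1) (cos (t1 + PI), sin (t1 + PI))).
  - apply H; lra.
  - apply H. pose proof PI_RGT_0. lra.
  - unfold dot; simpl. rewrite cos_plus, sin_plus, cos_PI, sin_PI.
    pose proof (sin2_cos2 t1). unfold Rsqr in H0. nra.
Qed.

Definition omega_set z := fun l => exists t1 t2, t1 <= t2 /\ l = t2 - t1 /\
            forall t, t1 <= t <= t2 -> outer_normal K z (cos t, sin t).

Lemma omega_set_bound z l : omega_set z l -> l <= PI.
Proof. intros (t1 & t2 & H12 & -> & H). pose proof (interval_lt_pi z t1 t2 (conj H12 H)). lra. Qed.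

Lemma Omega_ge z t1 t2 : normal_interval z t1 t2 -> t2 - t1 <= Omega K z.
Proof.
  intros [H12 H]. unfold Omega. apply sup_of_ge with PI.
  - apply omega_set_bound.
  - exists t1, t2; auto.
Qed.

Lemma Omega_le_PI z : Omega K z <= PI.
Proof. unfold Omega. apply sup_of_le. pose proof PI_RGT_0; lra. apply omega_set_bound. Qed.

Lemma Omega_nonneg z : 0 <= Omega K z.
Proof.
  unfold Omega. change (0 <= sup_of (omega_set z)). destruct (classic (exists l, is_lub (omega_set z) l)) as [Hl|Hl].
  - pose proof (sup_of_lub _ Hl) as H. destruct (lub_nonempty _ _ H) as [x Hx].
    destruct H as [H1 _]. pose proof (H1 x Hx) as Hle. destruct Hx as (t1 & t2 & H12 & Ex & _).
    lra.
  - unfold omega_set in Hl. rewrite sup_of_none; auto; lra.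
Qed.

Lemma Omega_gt z x : 0 <= x -> Omega K z > x -> exists t1 t2, normal_interval z t1 t2 /\ t2 - t1 > x.
Proof.
  intros Hx H. unfold Omega in H. apply sup_of_gt in H; [|lra].
  destruct H as (l & (t1 & t2 & H12 & -> & Hn) & Hl). exists t1, t2. split; auto. split; auto.
Qed.

Lemma Omega_le_OmegaK z : boundary K z -> Omega K z <= Omega_K K.
Proof.
  intros Bz. unfold Omega_K. apply sup_of_ge with PI.
  - intros w (z' & _ & ->). apply Omega_le_PI.
  - exists z; auto.
Qed.

Lemma unit_angle (nu : pt) : dot nu nu = 1 -> exists t, nu = (cos t, sin t).
Proof.
  intros H. unfold dot in H.
  assert (Hb : -1 <= fst nu <= 1) by (split; nra).
  destruct (Rle_dec 0 (snd nu)) as [Hs|Hs].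
  - exists (acos (fst nu)). apply pt_eq; simpl.
    + rewrite cos_acos; auto.
    + rewrite sin_acos; auto. replace (1 - (fst nu)²) with (Rsqr (snd nu)) by (unfold Rsqr; nra).
      rewrite sqrt_Rsqr; auto.
  - exists (- acos (fst nu)). apply pt_eq; simpl.
    + rewrite cos_neg, cos_acos; auto.
    + rewrite sin_neg, sin_acos; auto. replace (1 - (fst nu)²) with (Rsqr (- snd nu)) by (unfold Rsqr; nra).
      rewrite sqrt_Rsqr; lra.
Qed.

Lemma acos_ge_half c : -1 <= c <= 0 -> PI / 2 <= acos c.
Proof.
  intros Hc. destruct (acos_bound c) as [A1 A2].
  apply Rnot_lt_le; intro Hlt.
  destruct (Req_dec c 0) as [->|Hne].
  - rewrite acos_0 in Hlt; lra.
  - assert (0 < cos (acos c)) by (apply cos_gt_0; lra).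
    rewrite cos_acos in H by lra. lra.
Qed.

Lemma acos_gt_half c : -1 <= c < 0 -> PI / 2 < acos c.
Proof.
  intros Hc. pose proof (acos_ge_half c ltac:(lra)).
  destruct H; auto. exfalso.
  pose proof (cos_acos c ltac:(lra)) as H0. rewrite <- H in H0. rewrite cos_PI2 in H0. lra.
Qed.

Lemma arc_core z nu mu : outer_normal K z nu -> outer_normal K z mu -> dot nu mu <= 0 ->
  forall t, nu = (cos t, sin t) -> dot mu (- sin t, cos t) >= 0 ->
  normal_interval z t (t + acos (dot nu mu)).
Proof.
  intros Hnu Hmu Hd t Et Hs.
  pose proof Hmu as [Nm Hm]. apply pnorm1 in Nm. pose proof Hnu as [Nn Hn].
  set (c := dot nu mu). set (s := dot mu (- sin t, cos t)).
  assert (Hc0 : c <= 0) by exact Hd. assert (Hs0 : s >= 0) by exact Hs.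
  assert (Hc1 : -1 < c).
  { destruct (Rle_dec c (-1)); [|lra]. exfalso.
    apply (no_opp_normals K HK z nu mu Hnu Hmu).
    assert (c >= -1). { subst c. rewrite Et in *. unfold dot in *; simpl in *.
      pose proof (sin2_cos2 t). unfold Rsqr in H. nra. } unfold c in *; lra. }
  set (th := acos c).
  assert (Ecos : cos th = c) by (apply cos_acos; lra).
  assert (Esin : sin th = sqrt (1 - c²)) by (apply sin_acos; lra).
  assert (Hsc : s * s = 1 - c ^ 2).
  { subst s c. rewrite Et. unfold dot in *; simpl in *. pose proof (sin2_cos2 t). unfold Rsqr in H. nra. }
  assert (Ess : sin th = s).
  { rewrite Esin. replace (1 - c²) with (Rsqr s) by (unfold Rsqr; lra). apply sqrt_Rsqr; lra. }
  assert (Hth : PI / 2 <= th) by (apply acos_ge_half; lra).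
  assert (HthPI : th <= PI) by (apply acos_bound).
  assert (Spos : 0 < s).
  { destruct (Rle_dec s 0); [|lra]. exfalso. assert (s = 0) by lra.
    assert (c * c = 1) by nra. assert (c = -1) by nra. lra. }
  (* mu = unit (t + th) *)
  assert (Emu : mu = (cos t * c - sin t * s, sin t * c + cos t * s)).
  { subst s c. rewrite Et. unfold dot; simpl. pose proof (sin2_cos2 t). unfold Rsqr in H.
    destruct mu as [m1 m2]; simpl.
    apply pt_eq; simpl.
    - transitivity (m1 * (sin t * sin t + cos t * cos t)); [rewrite H; ring| ring].
    - transitivity (m2 * (sin t * sin t + cos t * cos t)); [rewrite H; ring| ring]. }
  split. { pose proof PI_RGT_0. unfold th in *; lra. }
  intros tau Htau. split.
  { apply pnorm1. unfold dot; simpl. pose proof (sin2_cos2 tau). unfold Rsqr in H. lra. }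
  intros y Ky. specialize (Hn y Ky). specialize (Hm y Ky).
  set (phi := tau - t).
  assert (Hphi : 0 <= phi <= th) by (unfold phi, th in *; lra).
  assert (S1 : 0 <= sin (th - phi)) by (apply sin_ge_0; lra).
  assert (S2 : 0 <= sin phi) by (apply sin_ge_0; lra).
  assert (Key : s * dot (psub y z) (cos tau, sin tau) =
     sin (th - phi) * dot (psub y z) nu + sin phi * dot (psub y z) mu).
  { replace tau with (t + phi) by (unfold phi; ring).
    rewrite sin_minus, cos_plus, sin_plus, Ecos, Ess, Emu, Et. unfold dot, psub; simpl. ring. }
  assert (s * dot (psub y z) (cos tau, sin tau) <= 0) by (rewrite Key; nra).
  nra.
Qed.

Lemma arc_normals z nu mu : outer_normal K z nu -> outer_normal K z mu -> dot nu mu <= 0 ->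
  acos (dot nu mu) <= Omega K z.
Proof.
  intros Hnu Hmu Hd.
  pose proof Hnu as [Nn _]. apply pnorm1 in Nn. pose proof Hmu as [Nm _]. apply pnorm1 in Nm.
  destruct (unit_angle nu Nn) as [t Et]. destruct (unit_angle mu Nm) as [t' Et'].
  destruct (Rle_dec 0 (dot mu (- sin t, cos t))) as [Hs|Hs].
  - pose proof (arc_core z nu mu Hnu Hmu Hd t Et ltac:(lra)).
    pose proof (Omega_ge _ _ _ H). lra.
  - assert (Hd' : dot mu nu <= 0) by (unfold dot in *; lra).
    assert (dot nu (- sin t', cos t') >= 0).
    { rewrite Et, Et' in *. unfold dot in *; simpl in *. lra. }
    pose proof (arc_core z mu nu Hmu Hnu Hd' t' Et' H).
    pose proof (Omega_ge _ _ _ H0). replace (dot mu nu) with (dot nu mu) in H1 by (unfold dot; ring). lra.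
Qed.

End Geo2.

Definition epsn (n : nat) : R := / INR (S n).

Lemma epsn_pos n : 0 < epsn n.
Proof. unfold epsn. apply Rinv_0_lt_compat. apply lt_0_INR; lia. Qed.

Lemma epsn_small e : 0 < e -> exists N, forall n, (n >= N)%nat -> epsn n < e.
Proof.
  intros He. destruct (archimed_cor1 e He) as [N [HN HN0]]. exists N. intros n Hn.
  unfold epsn. apply Rle_lt_trans with (/ INR N); auto.
  apply Rinv_le_contravar. apply lt_0_INR; lia. apply le_INR; lia.
Qed.

Lemma epsn_le n m : (n <= m)%nat -> epsn m <= epsn n.
Proof. intros H. unfold epsn. apply Rinv_le_contravar. apply lt_0_INR; lia. apply le_INR; lia. Qed.

Definition incr (phi : nat -> nat) := forall n, (phi n < phi (S n))%nat.

Lemma incr_ge phi : incr phi -> forall n, (n <= phi n)%nat.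
Proof. intros H n; induction n; [lia|]. specialize (H n); lia. Qed.

Lemma incr_mono phi : incr phi -> forall n m, (n <= m)%nat -> (phi n <= phi m)%nat.
Proof. intros H n m Hnm; induction Hnm; [lia|]. specialize (H m); lia. Qed.

Lemma incr_comp phi psi : incr phi -> incr psi -> incr (fun n => phi (psi n)).
Proof.
  intros H1 H2 n. specialize (H2 n).
  assert (forall a b, (a < b)%nat -> (phi a < phi b)%nat).
  { intros a b Hab. induction Hab. apply H1. specialize (H1 m). lia. }
  auto.
Qed.

Lemma cv_sub (x : nat -> R) l phi : Un_cv x l -> incr phi -> Un_cv (fun n => x (phi n)) l.
Proof.
  intros H Hp e He. destruct (H e He) as [N HN]. exists N. intros n Hn.
  apply HN. pose proof (incr_ge phi Hp n). lia.
Qed.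

Definition build (f : nat -> nat -> nat) : nat -> nat :=
  fix g n := match n with 0 => f 0%nat 0%nat | S m => f (S (g m)) (S m) end.

Lemma BW1 (x : nat -> R) M : (forall n, Rabs (x n) <= M) ->
  exists phi, incr phi /\ exists l, Un_cv (fun n => x (phi n)) l.
Proof.
  intros HM.
  destruct (Bolzano_Weierstrass x (fun c => -M <= c <= M) (compact_P3 (-M) M)) as [l Hl].
  { intros n. apply Rabs_le_inv; auto. }
  assert (Hs : forall N k, exists p, (N <= p)%nat /\ Rabs (x p - l) < epsn k).
  { intros N k. destruct (Hl (disc l (mkposreal _ (epsn_pos k))) N) as [p [Hp1 Hp2]].
    - exists (mkposreal _ (epsn_pos k)). intros y Hy; auto.
    - exists p; split; auto. }
  set (f := fun N k => proj1_sig (constructive_indefinite_description _ (Hs N k))).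
  assert (Hf : forall N k, (N <= f N k)%nat /\ Rabs (x (f N k) - l) < epsn k).
  { intros N k. unfold f. destruct constructive_indefinite_description; auto. }
  exists (build f). split.
  - intro n. simpl. destruct (Hf (S (build f n)) (S n)); lia.
  - exists l. intros e He. destruct (epsn_small e He) as [N HN]. exists N. intros n Hn.
    unfold Rdist. destruct n; simpl.
    + destruct (Hf 0%nat 0%nat) as [_ H]. specialize (HN 0%nat Hn). lra.
    + destruct (Hf (S (build f n)) (S n)) as [_ H]. specialize (HN (S n) Hn). lra.
Qed.

Definition cvp (p : nat -> pt) (l : pt) :=
  Un_cv (fun n => fst (p n)) (fst l) /\ Un_cv (fun n => snd (p n)) (snd l).

Lemma cvp_sub p l phi : cvp p l -> incr phi -> cvp (fun n => p (phi n)) l.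
Proof. intros [H1 H2] Hp. split; apply (cv_sub _ _ _ H1 Hp) || apply (cv_sub _ _ _ H2 Hp). Qed.

Lemma BWpt (p : nat -> pt) M : (forall n, Rabs (fst (p n)) <= M /\ Rabs (snd (p n)) <= M) ->
  exists phi, incr phi /\ exists l, cvp (fun n => p (phi n)) l.
Proof.
  intros HM. destruct (BW1 (fun n => fst (p n)) M) as (phi1 & Hp1 & l1 & Hl1).
  { intros n; apply HM. }
  destruct (BW1 (fun n => snd (p (phi1 n))) M) as (phi2 & Hp2 & l2 & Hl2).
  { intros n; apply HM. }
  exists (fun n => phi1 (phi2 n)). split. apply incr_comp; auto.
  exists (l1, l2). split; simpl; auto.
  apply (cv_sub (fun n => fst (p (phi1 n))) l1 phi2 Hl1 Hp2).
Qed.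

Lemma cv_le (u : nat -> R) l b : Un_cv u l -> (forall n, u n <= b) -> l <= b.
Proof.
  intros H Hb. apply Rnot_lt_le; intro Hl. destruct (H (l - b)) as [N HN]; [lra|].
  specialize (HN N (le_n N)). specialize (Hb N). unfold Rdist in HN.
  apply Rabs_def2 in HN. lra.
Qed.

Lemma cv_eq (u : nat -> R) l b : Un_cv u l -> (forall n, u n = b) -> l = b.
Proof.
  intros H Hb. apply Rle_antisym. apply (cv_le u); auto. intros n; rewrite Hb; lra.
  assert (Un_cv (fun n => - u n) (- l)) by (apply CV_opp; auto).
  assert (- l <= - b). { apply (cv_le _ _ _ H0). intros n; rewrite Hb; lra. } lra.
Qed.

Lemma cv_dot (a b : nat -> pt) la lb : cvp a la -> cvp b lb ->
  Un_cv (fun n => dot (a n) (b n)) (dot la lb).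
Proof.
  intros [A1 A2] [B1 B2]. unfold dot. apply CV_plus; apply CV_mult; auto.
Qed.

Lemma cvp_psub (a b : nat -> pt) la lb : cvp a la -> cvp b lb ->
  cvp (fun n => psub (a n) (b n)) (psub la lb).
Proof. intros [A1 A2] [B1 B2]. split; simpl; apply CV_minus; auto. Qed.

Lemma cvp_const (q : pt) : cvp (fun _ => q) q.
Proof. split; intros e He; exists 0%nat; intros; unfold Rdist; rewrite Rminus_diag, Rabs_R0; lra. Qed.

Lemma cvp_dist p l : cvp p l -> forall r, 0 < r -> exists N, forall n, (n >= N)%nat ->
  dot (psub (p n) l) (psub (p n) l) < r * r.
Proof.
  intros H r Hr. pose proof (cv_dot _ _ _ _ (cvp_psub _ _ _ _ H (cvp_const l)) (cvp_psub _ _ _ _ H (cvp_const l))) as Hd.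
  assert (E : dot (psub l l) (psub l l) = 0) by (unfold dot, psub; simpl; ring).
  rewrite E in Hd. destruct (Hd (r * r)) as [N HN]; [nra|]. exists N. intros n Hn.
  specialize (HN n Hn). unfold Rdist in HN. apply Rabs_def2 in HN. lra.
Qed.

Lemma cvp_close p q l c : cvp q l -> 0 <= c ->
  (forall n, Rabs (fst (p n) - fst (q n)) <= c * epsn n /\ Rabs (snd (p n) - snd (q n)) <= c * epsn n) ->
  cvp p l.
Proof.
  intros [Q1 Q2] Hc H. split.
  - intros e He. destruct (Q1 (e/2)) as [N1 HN1]; [lra|].
    destruct (epsn_small (e / 2 / (c + 1))) as [N2 HN2].
    { apply Rdiv_lt_0_compat; lra. }
    exists (max N1 N2). intros n Hn. specialize (HN1 n ltac:(lia)). specialize (HN2 n ltac:(lia)).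
    destruct (H n) as [A _]. unfold Rdist in *. apply Rabs_le_inv in A. apply Rabs_def2 in HN1.
    assert (c * epsn n <= e / 2).
    { pose proof (epsn_pos n). apply Rle_trans with ((c+1) * epsn n). nra.
      apply Rmult_lt_compat_l with (r := c + 1) in HN2; [|lra].
      replace ((c + 1) * (e / 2 / (c + 1))) with (e/2) in HN2 by (field; lra). lra. }
    apply Rabs_def1; lra.
  - intros e He. destruct (Q2 (e/2)) as [N1 HN1]; [lra|].
    destruct (epsn_small (e / 2 / (c + 1))) as [N2 HN2].
    { apply Rdiv_lt_0_compat; lra. }
    exists (max N1 N2). intros n Hn. specialize (HN1 n ltac:(lia)). specialize (HN2 n ltac:(lia)).
    destruct (H n) as [_ A]. unfold Rdist in *. apply Rabs_le_inv in A. apply Rabs_def2 in HN1.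
    assert (c * epsn n <= e / 2).
    { pose proof (epsn_pos n). apply Rle_trans with ((c+1) * epsn n). nra.
      apply Rmult_lt_compat_l with (r := c + 1) in HN2; [|lra].
      replace ((c + 1) * (e / 2 / (c + 1))) with (e/2) in HN2 by (field; lra). lra. }
    apply Rabs_def1; lra.
Qed.

Lemma close_of_dot (a b : pt) r : 0 <= r -> dot (psub a b) (psub a b) <= r * r ->
  Rabs (fst a - fst b) <= r /\ Rabs (snd a - snd b) <= r.
Proof.
  intros Hr H. unfold dot, psub in H; simpl in H.
  pose proof (Rle_0_sqr (snd a - snd b)). pose proof (Rle_0_sqr (fst a - fst b)). unfold Rsqr in *.
  rewrite <- (Rabs_right r) by lra. split; apply Rsqr_le_abs_0; unfold Rsqr; lra.
Qed.

Lemma cv_le_ev (u : nat -> R) l b : Un_cv u l -> (exists N, forall n, (n >= N)%nat -> u n <= b) -> l <= b.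
Proof.
  intros H [N HN]. apply Rnot_lt_le; intro Hl. destruct (H (l - b)) as [N' HN']; [lra|].
  specialize (HN' (max N N') ltac:(lia)). specialize (HN (max N N') ltac:(lia)). unfold Rdist in HN'.
  apply Rabs_def2 in HN'. lra.
Qed.

Section Geo3.
Variable K : pt -> Prop.
Hypothesis HK : convex_domain K.

Lemma K_limit p l : (forall n, K (p n)) -> cvp p l -> K l.
Proof.
  intros Hp Hl. apply (closed_limit K HK). intros r Hr.
  destruct (cvp_dist p l Hl r Hr) as [N HN]. exists (p N); split; auto.
Qed.

Lemma normal_limit z nu zs nus : (forall n, outer_normal K (z n) (nu n)) -> cvp z zs -> cvp nu nus ->
  outer_normal K zs nus.
Proof.
  intros H Hz Hn. split.
  - apply pnorm1. apply (cv_eq (fun n => dot (nu n) (nu n))). apply cv_dot; auto.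
    intros n. destruct (H n) as [Hn1 _]. apply pnorm1; auto.
  - intros y Ky. apply (cv_le (fun n => dot (psub y (z n)) (nu n))).
    + apply cv_dot; auto. apply cvp_psub; auto. apply cvp_const.
    + intros n. destruct (H n) as [_ Hn2]. auto.
Qed.

Lemma nearest e : exists z, K z /\ forall y, K y -> dot (psub e z) (psub e z) <= dot (psub e y) (psub e y).
Proof.
  destruct (Kball K HK) as (c & rho & Hr & Hb). assert (Kc : K c) by (apply Hb; rewrite dot_psub_self; nra).
  destruct (Kbound K HK) as (M & HM0 & HM).
  set (F := fun v => exists y, K y /\ v = - dot (psub e y) (psub e y)).
  assert (FB : forall v, F v -> v <= 0). { intros v (y & _ & ->). unfold dot, psub; simpl. pose proof (Rle_0_sqr (fst e - fst y)). pose proof (Rle_0_sqr (snd e - snd y)). unfold Rsqr in *. lra. }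
  destruct (lub_exists F 0 (- dot (psub e c) (psub e c)) FB) as [m [Hm1 Hm2]]. { exists c; auto. }
  assert (Hy : forall n, exists y, K y /\ dot (psub e y) (psub e y) < - m + epsn n).
  { intros n. apply NNPP; intro Hno. pose proof (epsn_pos n).
    assert (m <= m - epsn n).
    { apply Hm2. intros v (y & Ky & ->). apply Rnot_lt_le; intro. apply Hno. exists y; split; auto. lra. }
    lra. }
  apply my_choice in Hy. destruct Hy as [y Hy].
  destruct (BWpt y M) as (phi & Hphi & z & Hz). { intros n; apply HM; apply Hy. }
  assert (Kz : K z). { apply (K_limit (fun n => y (phi n))); auto. intros; apply Hy. }
  exists z. split; auto. intros w Kw.
  assert (Hw : - dot (psub e w) (psub e w) <= m) by (apply Hm1; exists w; auto).
  enough (dot (psub e z) (psub e z) <= - m) by lra.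
  apply Rnot_lt_le; intro Hlt.
  set (g := dot (psub e z) (psub e z) + m).
  assert (Hcv : Un_cv (fun n => dot (psub e (y (phi n))) (psub e (y (phi n)))) (dot (psub e z) (psub e z))).
  { apply cv_dot; apply cvp_psub; auto; apply cvp_const. }
  assert (dot (psub e z) (psub e z) <= - m + g / 2).
  { apply (cv_le_ev _ _ _ Hcv). destruct (epsn_small (g/2)) as [N HN]. unfold g; lra.
    exists N. intros n Hn. destruct (Hy (phi n)) as [_ H1]. specialize (HN (phi n)).
    pose proof (incr_ge phi Hphi n). specialize (HN ltac:(lia)). lra. }
  unfold g in H. lra.
Qed.

Lemma variational e z : K z -> (forall y, K y -> dot (psub e z) (psub e z) <= dot (psub e y) (psub e y)) ->
  forall y, K y -> dot (psub y z) (psub e z) <= 0.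
Proof.
  intros Kz Hmin y Ky. apply Rnot_lt_le; intro HA.
  set (A := dot (psub y z) (psub e z)) in *. set (B := dot (psub y z) (psub y z)).
  assert (HB : 0 <= B) by (unfold B, dot; nra).
  set (t := A / (A + B)).
  assert (Ht : 0 < t <= 1).
  { unfold t. split. apply Rdiv_lt_0_compat; lra. apply (Rmult_le_reg_r (A + B)); [lra|].
    unfold Rdiv. rewrite Rmult_assoc, Rinv_l; lra. }
  set (w := padd z (pscale t (psub y z))).
  assert (Kw : K w). { apply (Kconv K HK z y t); auto; try lra; unfold w; simpl; ring. }
  specialize (Hmin w Kw).
  assert (E : dot (psub e w) (psub e w) = dot (psub e z) (psub e z) - 2 * t * A + t * t * B).
  { unfold w, A, B, dot, psub, padd, pscale; simpl; ring. }
  rewrite E in Hmin.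
  assert (Et : t * (A + B) = A) by (unfold t; field; lra).
  nra.
Qed.

Lemma normal_from_ext e : ~ K e -> exists z k, K z /\ 0 < k /\
  outer_normal K z (pscale k (psub e z)) /\
  (forall y, K y -> dot (psub e z) (psub e z) <= dot (psub e y) (psub e y)).
Proof.
  intros He. destruct (nearest e) as (z & Kz & Hz).
  set (D := dot (psub e z) (psub e z)).
  assert (HD : 0 < D).
  { unfold D, dot, psub. destruct (Req_dec (fst e) (fst z)); destruct (Req_dec (snd e) (snd z)).
    - exfalso. apply He. replace e with z; auto. apply pt_eq; auto.
    - assert (0 < (snd e - snd z) * (snd e - snd z)). { apply Rsqr_pos_lt. lra. } simpl. nra.
    - assert (0 < (fst e - fst z) * (fst e - fst z)). { apply Rsqr_pos_lt. lra. } simpl. nra.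
    - assert (0 < (fst e - fst z) * (fst e - fst z)). { apply Rsqr_pos_lt. lra. } simpl. nra. }
  exists z, (/ sqrt D). split; auto. split. { apply Rinv_0_lt_compat, sqrt_lt_R0; auto. }
  split; auto. split.
  - apply pnorm1.
    assert (Hs : sqrt D * sqrt D = D) by (apply sqrt_sqrt; lra).
    assert (Hs0 : 0 < sqrt D) by (apply sqrt_lt_R0; auto).
    transitivity (/ sqrt D * / sqrt D * D). { unfold D, dot, pscale, psub; simpl; ring. }
    rewrite <- Hs at 3. field. lra.
  - intros y Ky. pose proof (variational e z Kz Hz y Ky).
    replace (dot (psub y z) (pscale (/ sqrt D) (psub e z))) with (/ sqrt D * dot (psub y z) (psub e z))
      by (unfold dot, pscale; simpl; ring).
    assert (0 < / sqrt D) by (apply Rinv_0_lt_compat, sqrt_lt_R0; auto). nra.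
Qed.

Lemma normal_exists p : boundary K p -> exists nu, outer_normal K p nu.
Proof.
  intros [Kp Hp].
  assert (He : forall n, exists e, dot (psub e p) (psub e p) < epsn n * epsn n /\ ~ K e).
  { intros n. apply NNPP; intro Hno. apply Hp. exists (epsn n). split. apply epsn_pos.
    intros q Hq. apply NNPP; intro Hq'. apply Hno. exists q. split; auto. apply dist_lt_inv; auto. }
  apply my_choice in He. destruct He as [e He].
  assert (Hz : forall n, exists zk, K (fst zk) /\ outer_normal K (fst zk) (snd zk) /\
     Rabs (fst (fst zk) - fst p) <= 2 * epsn n /\ Rabs (snd (fst zk) - snd p) <= 2 * epsn n).
  { intros n. destruct (He n) as [H1 H2]. destruct (normal_from_ext (e n) H2) as (z & k & Kz & Hk & Hn & Hmin).
    exists (z, pscale k (psub (e n) z)). simpl. split; auto. split; auto.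
    specialize (Hmin p Kp).
    pose proof (epsn_pos n).
    assert (A1 : dot (psub (e n) z) (psub (e n) z) <= epsn n * epsn n).
    { apply Rle_trans with (dot (psub (e n) p) (psub (e n) p)); auto. lra. }
    apply close_of_dot in A1; [|lra]. apply Rlt_le in H1. apply close_of_dot in H1; [|lra].
    destruct A1 as [A1 A2]; destruct H1 as [B1 B2]. simpl in *.
    apply Rabs_le_inv in A1, A2, B1, B2. split; apply Rabs_le; split; lra. }
  apply my_choice in Hz. destruct Hz as [zk Hz].
  destruct (BWpt (fun n => snd (zk n)) 1) as (phi & Hphi & nu & Hnu).
  { intros n. destruct (Hz n) as (_ & [Hn _] & _). apply pnorm1 in Hn. unfold dot in Hn.
    split; apply Rabs_le; split; nra. }
  exists nu. apply (normal_limit (fun n => fst (zk (phi n))) (fun n => snd (zk (phi n)))); auto.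
  - intros n; apply Hz.
  - apply (cvp_close _ (fun _ => p) p 2); [apply cvp_const|lra|].
    intros n. destruct (Hz (phi n)) as (_ & _ & H1 & H2). pose proof (epsn_le n (phi n) (incr_ge phi Hphi n)).
    split; lra.
Qed.

Lemma short_chords : (forall n, exists p, boundary K p /\ local_depth K p < epsn n) ->
  exists z nu mu, boundary K z /\ outer_normal K z nu /\ outer_normal K z mu /\ dot nu mu <= 0 /\
    forall r, 0 < r -> exists p, boundary K p /\ local_depth K p < r /\ dot (psub p z) (psub p z) < r * r.
Proof.
  intros H. apply my_choice in H. destruct H as [p Hp].
  destruct (Kbound K HK) as (M & HM0 & HM).
  assert (Hdata : forall n, exists w : pt * pt * pt, outer_normal K (p n) (snd (fst w)) /\
     outer_normal K (fst (fst w)) (snd w) /\ dot (snd (fst w)) (snd w) <= 0 /\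
     Rabs (fst (fst (fst w)) - fst (p n)) <= 2 * epsn n /\ Rabs (snd (fst (fst w)) - snd (p n)) <= 2 * epsn n).
  { intros n. destruct (Hp n) as [Bp Hld]. destruct (normal_exists _ Bp) as [nu Hnu].
    pose proof Bp as [Kp _].
    destruct (chord_exists K HK (p n) nu Kp Hnu) as (h & Hh & Hc).
    assert (Hhl : h <= local_depth K (p n)).
    { apply ld_ge; auto. exists nu; auto. }
    set (tau := epsn n). assert (Htau : 0 < tau) by apply epsn_pos.
    set (e := padd (p n) (pscale (- (h + tau)) nu)).
    assert (Ke : ~ K e). { intro Ke. apply Hc in Ke. lra. }
    set (q := padd (p n) (pscale (- h) nu)).
    assert (Kq : K q) by (apply Hc; lra).
    destruct (normal_from_ext e Ke) as (z & k & Kz & Hk & Hm & Hmin).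
    exists (z, nu, pscale k (psub e z)). simpl. split; auto. split; auto.
    pose proof (variational e z Kz Hmin q Kq) as V.
    pose proof Hnu as [Nn _]. apply pnorm1 in Nn.
    assert (Ee1 : fst e = fst q - tau * fst nu) by (unfold e, q; simpl; ring).
    assert (Ee2 : snd e = snd q - tau * snd nu) by (unfold e, q; simpl; ring).
    set (d1 := fst z - fst q). set (d2 := snd z - snd q).
    unfold dot in Nn.
    set (dn := d1 * fst nu + d2 * snd nu).
    assert (V' : tau * dn + (d1 * d1 + d2 * d2) <= 0).
    { replace (tau * dn + (d1 * d1 + d2 * d2)) with (dot (psub q z) (psub e z)); auto.
      unfold dot, psub. cbn [fst snd]. rewrite Ee1, Ee2. unfold dn, d1, d2. ring. }
    assert (CS : dn * dn <= d1 * d1 + d2 * d2).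
    { assert (E : (d1*d1+d2*d2)*(fst nu*fst nu+snd nu*snd nu) - dn*dn = (d1 * snd nu - d2 * fst nu) * (d1 * snd nu - d2 * fst nu)) by (unfold dn; ring).
      rewrite Nn in E. pose proof (Rle_0_sqr (d1 * snd nu - d2 * fst nu)). unfold Rsqr in *. lra. }
    assert (Hdn : - tau <= dn <= 0) by (split; nra).
    assert (Hd2 : d1 * d1 + d2 * d2 <= tau * tau) by nra.
    split.
    - unfold dot, pscale, psub; cbn [fst snd]. rewrite Ee1, Ee2.
      apply Rle_trans with (k * (- tau * (fst nu * fst nu + snd nu * snd nu) - dn)).
      { right. unfold dn, d1, d2. ring. }
      rewrite Nn. nra.
    - assert (Hq1 : fst q = fst (p n) - h * fst nu) by (unfold q; simpl; ring).
      assert (Hq2 : snd q = snd (p n) - h * snd nu) by (unfold q; simpl; ring).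
      assert (Hd1' : Rabs d1 <= tau /\ Rabs d2 <= tau).
      { split; apply Rabs_le; split; nra. }
      assert (Hnu1 : Rabs (fst nu) <= 1 /\ Rabs (snd nu) <= 1) by (split; apply Rabs_le; split; nra).
      destruct Hd1' as [D1 D2]. destruct Hnu1 as [N1 N2].
      apply Rabs_le_inv in D1, D2, N1, N2.
      assert (h < tau) by (unfold tau; lra).
      split; apply Rabs_le; split; unfold d1, d2 in *; rewrite ?Hq1, ?Hq2 in *; nra. }
  apply my_choice in Hdata. destruct Hdata as [w Hw].
  destruct (BWpt p M) as (phi1 & Hp1 & zs & Hzs). { intros n. apply HM. apply (Hp n). }
  destruct (BWpt (fun n => snd (fst (w (phi1 n)))) 1) as (phi2 & Hp2 & nus & Hnus).
  { intros n. destruct (Hw (phi1 n)) as ([Hn _] & _). apply pnorm1 in Hn. unfold dot in Hn.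
    split; apply Rabs_le; split; nra. }
  destruct (BWpt (fun n => snd (w (phi1 (phi2 n)))) 1) as (phi3 & Hp3 & mus & Hmus).
  { intros n. destruct (Hw (phi1 (phi2 n))) as (_ & [Hn _] & _). apply pnorm1 in Hn. unfold dot in Hn.
    split; apply Rabs_le; split; nra. }
  set (phi := fun n => phi1 (phi2 (phi3 n))).
  assert (Hphi : incr phi) by (unfold phi; apply incr_comp; [auto| apply incr_comp; auto]).
  assert (Cp : cvp (fun n => p (phi n)) zs).
  { apply (cvp_sub (fun n => p (phi1 n)) zs (fun n => phi2 (phi3 n))); auto. apply incr_comp; auto. }
  assert (Cnu : cvp (fun n => snd (fst (w (phi n)))) nus).
  { apply (cvp_sub (fun n => snd (fst (w (phi1 (phi2 n))))) nus phi3); auto. }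
  assert (Cmu : cvp (fun n => snd (w (phi n))) mus) by exact Hmus.
  assert (Cz : cvp (fun n => fst (fst (w (phi n)))) zs).
  { apply (cvp_close _ _ zs 2 Cp); [lra|]. intros n. destruct (Hw (phi n)) as (_ & _ & _ & H1 & H2).
    pose proof (epsn_le n (phi n) (incr_ge phi Hphi n)). split; lra. }
  assert (N1 : outer_normal K zs nus).
  { apply (normal_limit (fun n => p (phi n)) (fun n => snd (fst (w (phi n))))); auto. intros n; apply Hw. }
  assert (N2 : outer_normal K zs mus).
  { apply (normal_limit (fun n => fst (fst (w (phi n)))) (fun n => snd (w (phi n)))); auto. intros n; apply Hw. }
  exists zs, nus, mus. split; [|split; auto; split; auto; split].
  - split. apply (K_limit (fun n => p (phi n))); auto. intros n. apply (Hp (phi n)).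
    apply (normal_not_interior K zs nus N1).
  - apply (cv_le (fun n => dot (snd (fst (w (phi n)))) (snd (w (phi n))))). apply cv_dot; auto.
    intros n; apply Hw.
  - intros r Hr. destruct (cvp_dist _ _ Cp r Hr) as [N1' HN1]. destruct (epsn_small r Hr) as [N2' HN2].
    exists (p (phi (max N1' N2'))). destruct (Hp (phi (max N1' N2'))) as [B L]. split; auto. split.
    + pose proof (epsn_le (max N1' N2') (phi (max N1' N2')) (incr_ge phi Hphi _)).
      specialize (HN2 (max N1' N2') ltac:(lia)). lra.
    + apply HN1; lia.
Qed.

End Geo3.

Definition perp (sg : R) (n : pt) : pt := (sg * snd n, - sg * fst n).

Lemma parseval sg n u v : sg * sg = 1 -> dot n n = 1 ->
  dot u v = dot u (perp sg n) * dot v (perp sg n) + dot u n * dot v n.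
Proof.
  intros Hs Hn. unfold dot, perp in *; simpl in *.
  transitivity ((fst u * fst v + snd u * snd v) * (fst n * fst n + snd n * snd n)).
  { rewrite Hn; ring. }
  transitivity ((sg * sg) * ((fst u * snd n - snd u * fst n) * (fst v * snd n - snd v * fst n)) +
     (fst u * fst n + snd u * snd n) * (fst v * fst n + snd v * snd n)).
  { rewrite Hs; ring. } ring.
Qed.

Lemma perp_unit sg n : sg * sg = 1 -> dot n n = 1 -> dot (perp sg n) (perp sg n) = 1.
Proof. intros Hs Hn. unfold dot, perp in *; simpl. transitivity ((sg*sg) * (fst n * fst n + snd n * snd n)); [ring|]. rewrite Hs, Hn; ring. Qed.

Lemma perp_orth sg n : dot (perp sg n) n = 0.
Proof. unfold dot, perp; simpl; ring. Qed.

Lemma unit_dot_bound u v : dot u u = 1 -> dot v v = 1 -> -1 <= dot u v <= 1.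
Proof.
  intros Hu Hv. unfold dot in *.
  pose proof (Rle_0_sqr (fst u - fst v)). pose proof (Rle_0_sqr (snd u - snd v)).
  pose proof (Rle_0_sqr (fst u + fst v)). pose proof (Rle_0_sqr (snd u + snd v)). unfold Rsqr in *.
  split; nra.
Qed.


(* algebraic core of part (ii) *)
Lemma wedge_alg g k : 0 < g -> 0 < k -> g * g + k * k = 1 ->
  exists C, 0 < C /\ forall s Y0 a b h, 0 < s -> 0 <= Y0 -> k * Y0 <= g * s -> a * a + b * b = 1 ->
    a * s + b * Y0 >= 0 -> 0 <= h -> 0 <= Y0 - h * b -> k * (Y0 - h * b) <= g * (s - h * a) -> h <= C * s.
Proof.
  intros Hg Hk Hgk.
  assert (g <= 1) by nra. assert (k <= 1) by nra.
  exists (4 / (k * k) + 1 / k + 4). split.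
  { assert (0 < 4 / (k*k)) by (apply Rdiv_lt_0_compat; nra). assert (0 < 1 / k) by (apply Rdiv_lt_0_compat; nra). lra. }
  intros s Y0 a b h Hs HY0 HW Hab Hn Hh Hq1 Hq2.
  assert (P1 : 0 <= 4 / (k * k) * s) by (apply Rmult_le_pos; [apply Rlt_le, Rdiv_lt_0_compat; nra| lra]).
  assert (P2 : 0 <= 1 / k * s) by (apply Rmult_le_pos; [apply Rlt_le, Rdiv_lt_0_compat; nra| lra]).
  set (d := k * g / 4).
  destruct (Rle_dec d b) as [Hb|Hb].
  - (* h * b <= Y0 <= g s / k *)
    assert (h * d <= Y0) by nra.
    assert (h * (k * g / 4) * k <= g * s) by (unfold d in *; nra).
    assert (h * k * k <= 4 * s) by nra.
    assert (h <= 4 / (k * k) * s).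
    { apply (Rmult_le_reg_r (k * k)); [nra|]. unfold Rdiv. field_simplify; [|nra]. nra. }
    nra.
  - destruct (Rle_dec b 0) as [Hb0|Hb0].
    + assert (Ha : 0 <= a).
      { destruct (Rle_dec 0 a); auto. exfalso. assert (a * s < 0) by nra. assert (b * Y0 <= 0) by nra. lra. }
      assert (Hsum : 1 <= a - b) by nra.
      assert (h * (g * a - k * b) <= g * s) by nra.
      assert (g * k * a <= g * a).
      { assert (0 <= (1 - k) * (g * a)) by (apply Rmult_le_pos; nra). nra. }
      assert (- (g * k * b) <= - (k * b)).
      { assert (0 <= (1 - g) * (- (k * b))) by (apply Rmult_le_pos; nra). nra. }
      assert (g * k <= g * k * (a - b)).
      { assert (0 <= (g * k) * (a - b - 1)) by (apply Rmult_le_pos; nra). nra. }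
      assert (g * k <= g * a - k * b) by nra.
      assert (h * (g * k) <= g * s) by nra.
      assert (h * k <= s) by nra.
      assert (h <= 1 / k * s). { apply (Rmult_le_reg_r k); [nra|]. unfold Rdiv. field_simplify; [|nra]. nra. }
      nra.
    + assert (Hd : d <= 1/8) by (unfold d; pose proof (Rle_0_sqr (g - k)); unfold Rsqr in *; nra).
      assert (Ha1 : a * s >= - b * Y0) by lra.
      assert (b * (k * Y0) <= b * (g * s)) by (apply Rmult_le_compat_l; lra).
      assert (b * (g * s) <= d * (g * s)) by (apply Rmult_le_compat_r; nra).
      assert (b * Y0 * k <= d * g * s) by nra.
      assert (a * s * k >= - (d * g * s)) by nra.
      assert (a * k >= - (d * g)) by nra.
      assert (a * k >= - (k * g * g / 4)) by (unfold d in *; lra).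
      assert (a >= - (g * g / 4)) by nra.
      assert (a >= -1/4) by nra.
      assert (Ha : a >= 1/2).
      { destruct (Rle_dec (1/2) a); [lra|]. exfalso. assert (b * b < 1/64) by (unfold d in *; nra). nra. }
      assert (h * (g * a - k * b) <= g * s) by nra.
      assert (g * a - k * b >= g / 4) by (unfold d in *; nra).
      assert (h * (g / 4) <= g * s) by nra.
      assert (h <= 4 * s) by nra.
      lra.
Qed.

Lemma dot_shift p t v z w : dot (psub (padd p (pscale t v)) z) w = dot (psub p z) w + t * dot v w.
Proof. unfold dot, psub, padd, pscale; simpl; ring. Qed.

Lemma dot_line z s e X d w : dot (psub (padd (padd z (pscale s e)) (pscale X d)) z) w = s * dot e w + X * dot d w.
Proof. unfold dot, psub, padd, pscale; simpl; ring. Qed.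

Lemma dot_comm u v : dot u v = dot v u.
Proof. unfold dot; ring. Qed.

Lemma expand_fst sg n u : sg * sg = 1 -> dot n n = 1 -> fst u = dot u (perp sg n) * fst (perp sg n) + dot u n * fst n.
Proof.
  intros Hs Hn. pose proof (parseval sg n u (1, 0) Hs Hn). unfold dot at 1 in H. simpl in H.
  rewrite Rmult_1_r, Rmult_0_r, Rplus_0_r in H. rewrite H. unfold dot; simpl; ring.
Qed.

Lemma expand_snd sg n u : sg * sg = 1 -> dot n n = 1 -> snd u = dot u (perp sg n) * snd (perp sg n) + dot u n * snd n.
Proof.
  intros Hs Hn. pose proof (parseval sg n u (0, 1) Hs Hn). unfold dot at 1 in H. simpl in H.
  rewrite Rmult_1_r, Rmult_0_r, Rplus_0_l in H. rewrite H. unfold dot; simpl; ring.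
Qed.

Lemma choose_sign n v : exists sg, sg * sg = 1 /\ dot v (perp sg n) <= 0.
Proof.
  destruct (Rle_dec (dot v (perp 1 n)) 0) as [H|H].
  - exists 1; split; auto; ring.
  - exists (-1); split; [ring|]. unfold dot, perp in *; simpl in *. lra.
Qed.

Section Part2.
Variable K : pt -> Prop.
Hypothesis HK : convex_domain K.

Lemma part2 zeta : boundary K zeta -> Omega K zeta > PI / 2 -> depth K = 0.
Proof.
  intros Bz HO.
  pose proof PI_RGT_0 as Hpi.
  destruct (Omega_gt K zeta (PI / 2)) as (t1 & t2 & [H12 Hint] & Hl); [lra|auto|].
  pose proof (interval_lt_pi K HK zeta t1 t2 (conj H12 Hint)) as Hlt.
  set (n := (cos t1, sin t1)). set (nB := (cos t2, sin t2)).
  assert (Nn : outer_normal K zeta n) by (apply Hint; lra).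
  assert (NB : outer_normal K zeta nB) by (apply Hint; lra).
  assert (Un : dot n n = 1) by (apply pnorm1; apply Nn).
  assert (UB : dot nB nB = 1) by (apply pnorm1; apply NB).
  assert (Hneg : dot n nB < 0).
  { unfold n, nB, dot; simpl. rewrite (Rmult_comm (cos t1)), (Rmult_comm (sin t1)), <- cos_minus.
    apply cos_lt_0; lra. }
  destruct (choose_sign n nB) as (sg & Hsg & HsB).
  set (e := perp sg n).
  set (k := - dot n nB). set (g := - dot nB e).
  assert (Hk : 0 < k) by (unfold k; lra).
  assert (Hgk : g * g + k * k = 1).
  { unfold g, k, e. rewrite (parseval sg n nB nB Hsg Un) in UB. rewrite (dot_comm n nB). lra. }
  assert (Hk1 : k < 1).
  { destruct (Rlt_dec k 1) as [|Hk1]; auto. exfalso.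
    destruct (unit_dot_bound n nB Un UB). apply (no_opp_normals K HK zeta n nB Nn NB). unfold k in *; lra. }
  assert (Hg : 0 < g). { assert (0 <= g) by (unfold g, e; lra). assert (g * g > 0) by nra. nra. }
  destruct (wedge_alg g k Hg Hk Hgk) as (C & HC & Halg).
  assert (Wedge : forall z, K z -> 0 <= - dot (psub z zeta) n /\
             k * (- dot (psub z zeta) n) <= g * dot (psub z zeta) e).
  { intros z Kz. destruct Nn as [_ H1]. destruct NB as [_ H2]. specialize (H1 z Kz). specialize (H2 z Kz).
    split; [lra|]. rewrite (parseval sg n (psub z zeta) nB Hsg Un) in H2. fold e in H2.
    unfold k, g. rewrite (dot_comm nB n) in *. nra. }
  destruct (Kball K HK) as (c & rho & Hr & Hb).
  assert (Kc : K c) by (apply Hb; rewrite dot_psub_self; nra).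
  set (Xc := dot (psub c zeta) e). set (Yc := - dot (psub c zeta) n).
  assert (HYc : rho / 2 <= Yc) by (pose proof (normal_strict K zeta n c rho Nn Hr Hb); unfold Yc; lra).
  assert (HXc : 0 < Xc). { destruct (Wedge c Kc) as [_ W]. fold Xc Yc in W. nra. }
  apply (depth_zero K). intros eps Heps.
  set (s := Rmin Xc (eps / C)).
  assert (Hs : 0 < s) by (unfold s; apply Rmin_glb_lt; auto; apply Rdiv_lt_0_compat; auto).
  assert (HsX : s <= Xc) by apply Rmin_l.
  assert (HsC : C * s <= eps).
  { assert (s <= eps / C) by apply Rmin_r. apply (Rmult_le_compat_l C) in H; [|lra].
    replace (C * (eps / C)) with eps in H by (field; lra). auto. }
  set (b0 := padd zeta (pscale s e)). set (d := pscale (-1) n).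
  assert (Hed : dot e n = 0) by apply perp_orth.
  assert (Hee : dot e e = 1) by (apply perp_unit; auto).
  assert (Hne : dot n e = 0) by (rewrite dot_comm; auto).
  assert (Pdot : forall X w, dot (psub (padd b0 (pscale X d)) zeta) w = s * dot e w - X * dot n w).
  { intros X w. unfold b0, d. rewrite dot_line. unfold dot, pscale; simpl; ring. }
  destruct (line_min K HK b0 d) as (Y0 & Kp & Hmin & Bp).
  { replace (dot d d) with (dot n n) by (unfold d, dot, pscale; cbn [fst snd]; ring). lra. }
  { set (lam := s / Xc).
    assert (Hlam : 0 < lam <= 1).
    { unfold lam; split. apply Rdiv_lt_0_compat; auto. apply (Rmult_le_reg_r Xc); auto.
      unfold Rdiv; rewrite Rmult_assoc, Rinv_l; lra. }
    exists (lam * Yc). apply (Kconv K HK zeta c lam); [apply Bz|exact Kc|lra| |].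
    - assert (Ec1 : fst c = fst zeta + (Xc * fst e + (- Yc) * fst n)).
      { pose proof (expand_fst sg n (psub c zeta) Hsg Un) as H. fold e in H. fold Xc in H.
        unfold Yc. cbn [fst snd psub] in H. lra. }
      assert (Hs' : lam * Xc = s) by (unfold lam; field; lra).
      unfold b0, d, padd, pscale; cbn [fst snd]. rewrite Ec1, <- Hs'. ring.
    - assert (Ec1 : snd c = snd zeta + (Xc * snd e + (- Yc) * snd n)).
      { pose proof (expand_snd sg n (psub c zeta) Hsg Un) as H. fold e in H. fold Xc in H.
        unfold Yc. cbn [fst snd psub] in H. lra. }
      assert (Hs' : lam * Xc = s) by (unfold lam; field; lra).
      unfold b0, d, padd, pscale; cbn [fst snd]. rewrite Ec1, <- Hs'. ring. }
  { exists 0. intros X KX. destruct (Wedge _ KX) as [W _]. rewrite Pdot in W. rewrite ?Un, ?Hed in W. lra. }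
  set (p := padd b0 (pscale Y0 d)) in *.
  exists p. split; auto.
  apply (ld_le K); [lra|]. intros nu h Hnu Hh Kq.
  pose proof Hnu as [Nnu Hnup]. apply pnorm1 in Nnu.
  set (a := dot nu e). set (b := - dot nu n).
  assert (Hab : a * a + b * b = 1).
  { rewrite (parseval sg n nu nu Hsg Un) in Nnu. fold e in Nnu. unfold a, b. lra. }
  assert (Pe : dot (psub p zeta) e = s) by (unfold p; rewrite Pdot, Hee, Hne; ring).
  assert (Pn : dot (psub p zeta) n = - Y0) by (unfold p; rewrite Pdot, Hed, Un; ring).
  destruct (Wedge p Kp) as [W1 W2]. rewrite Pn in W1. rewrite Pe, Pn in W2.
  assert (Hz : dot (psub zeta p) nu <= 0) by (apply Hnup; apply Bz).
  assert (Hpn : dot (psub p zeta) nu = s * a + Y0 * b).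
  { rewrite (parseval sg n (psub p zeta) nu Hsg Un). fold e. rewrite Pe, Pn. unfold a, b. ring. }
  assert (Hpn' : a * s + b * Y0 >= 0).
  { assert (dot (psub p zeta) nu = - dot (psub zeta p) nu) by (unfold dot, psub; simpl; ring). lra. }
  destruct (Wedge _ Kq) as [Q1 Q2]. rewrite (dot_shift p (-h) nu zeta n) in Q1, Q2.
  rewrite (dot_shift p (-h) nu zeta e) in Q2.
  rewrite Pn in Q1. rewrite Pe, Pn in Q2. fold a in Q2.
  assert (Hnn : dot nu n = - b) by (unfold b; ring).
  rewrite Hnn in Q1, Q2.
  assert (h <= C * s).
  { apply (Halg s Y0 a b h); auto; try lra. }
  lra.
Qed.

End Part2.

Section Part1.
Variable K : pt -> Prop.
Hypothesis HK : convex_domain K.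

Lemma neg_pos_depth : ~ (exists d, d > 0 /\ forall z, boundary K z -> d <= local_depth K z) ->
  forall n, exists p, boundary K p /\ local_depth K p < epsn n.
Proof.
  intros H n. apply NNPP; intro Hn. apply H. exists (epsn n). split. apply epsn_pos.
  intros z Bz. apply Rnot_lt_le. intro. apply Hn. eauto.
Qed.

Lemma half_pi_point : ~ (exists d, d > 0 /\ forall z, boundary K z -> d <= local_depth K z) ->
  exists z, boundary K z /\ PI / 2 <= Omega K z /\
    forall r, 0 < r -> exists p, boundary K p /\ local_depth K p < r /\ dot (psub p z) (psub p z) < r * r.
Proof.
  intros H. destruct (short_chords K HK (neg_pos_depth H)) as (z & nu & mu & Bz & N1 & N2 & Hd & Hseq).
  exists z. split; auto. split; auto.
  pose proof (arc_normals K HK z nu mu N1 N2 Hd).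
  assert (-1 <= dot nu mu).
  { apply (unit_dot_bound nu mu); apply pnorm1; [apply N1|apply N2]. }
  pose proof (acos_ge_half (dot nu mu) ltac:(lra)). lra.
Qed.

Lemma part1 : Omega_K K < PI / 2 -> depth K > 0.
Proof.
  intros HO. apply depth_pos; [apply boundary_exists; auto|].
  apply NNPP; intro Hno. destruct (half_pi_point Hno) as (z & Bz & Hz & _).
  pose proof (Omega_le_OmegaK K HK z Bz). lra.
Qed.

End Part1.

Lemma orth_perp n m : dot n n = 1 -> dot m m = 1 -> dot n m = 0 -> exists sg, sg * sg = 1 /\ m = perp sg n.
Proof.
  intros Hn Hm Hnm. unfold dot in *.
  set (sg := fst m * snd n - snd m * fst n).
  assert (L : (fst n * fst m + snd n * snd m) * (fst n * fst m + snd n * snd m) + sg * sg =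
     (fst n * fst n + snd n * snd n) * (fst m * fst m + snd m * snd m)) by (unfold sg; ring).
  rewrite Hn, Hm, Hnm in L.
  exists sg. split; [lra|]. unfold perp. apply pt_eq; simpl.
  - transitivity (fst m * (fst n * fst n + snd n * snd n)); [rewrite Hn; ring|].
    transitivity (fst n * (fst n * fst m + snd n * snd m) + snd n * sg); [unfold sg; ring|].
    rewrite Hnm; ring.
  - transitivity (snd m * (fst n * fst n + snd n * snd n)); [rewrite Hn; ring|].
    transitivity (snd n * (fst n * fst m + snd n * snd m) - fst n * sg); [unfold sg; ring|].
    rewrite Hnm; ring.
Qed.

Lemma iv_alg M r1 dl eps s x h a b : 0 < s -> 0 <= x -> x <= M * s -> 0 <= M ->
  a * a + b * b = 1 -> x * a + s * b >= 0 -> 0 <= h -> 0 <= x - h * a -> 0 <= s - h * b ->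
  (dl <= x - h * a -> r1 * (x - h * a) <= dl * (s - h * b)) -> 0 < r1 -> 0 < eps -> dl = eps / 4 ->
  s <= r1 -> s * (4 + 4 * M + 4 * M * M) <= eps -> h <= eps.
Proof.
  intros Hs Hx HxM HM Hab Hn Hh HXq HYq Hcone Hr1 He Hdl Hsr Hse.
  assert (HMs : M * s <= eps / 4) by nra.
  assert (HMs2 : M * M * s <= eps / 4) by nra.
  assert (Hs4 : s <= eps / 4) by nra.
  destruct (Rle_dec 0 b) as [Hb|Hb].
  - set (Xq := x - h * a) in *. set (Yq := s - h * b) in *.
    assert (HXb : Xq <= dl + dl * s / r1).
    { destruct (Rle_dec dl Xq) as [Hd|Hd].
      - specialize (Hcone Hd). assert (Yq <= s) by (unfold Yq; nra).
        assert (r1 * Xq <= dl * s) by nra.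
        assert (Xq <= dl * s / r1). { apply (Rmult_le_reg_l r1); auto. unfold Rdiv. field_simplify; [|lra]. nra. }
        assert (0 <= dl * s / r1). { apply Rmult_le_pos; [nra| apply Rlt_le, Rinv_0_lt_compat; lra]. }
        lra.
      - assert (0 <= dl * s / r1). { apply Rmult_le_pos; [nra| apply Rlt_le, Rinv_0_lt_compat; lra]. }
        lra. }
    assert (dl * s / r1 <= dl). { unfold Rdiv. apply (Rmult_le_reg_l r1); auto. field_simplify; [|lra]. nra. }
    assert (HX : Xq <= eps / 2) by lra.
    assert (E1 : h * a = x - Xq) by (unfold Xq; ring).
    assert (E2 : h * b = s - Yq) by (unfold Yq; ring).
    assert (Hh2 : h * h = (x - Xq) * (x - Xq) + (s - Yq) * (s - Yq)).
    { rewrite <- E1, <- E2. transitivity (h * h * (a * a + b * b)); [rewrite Hab; ring| ring]. }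
    assert (Y1 : 0 <= s - Yq <= s) by (split; unfold Yq; nra).
    assert (X1 : - (eps/2) <= x - Xq <= eps / 4) by (unfold Xq in *; nra).
    assert (h * h <= eps * eps) by nra.
    nra.
  - assert (Ha : a > 0). { destruct (Rle_dec a 0); [|lra]. exfalso. assert (x * a <= 0) by nra. nra. }
    assert (Hxa : h * a <= x) by lra.
    destruct (Rle_dec (1/2) a) as [Ha2|Ha2].
    + assert (h * (1/2) <= x) by nra. nra.
    + assert (Hb2 : b * b > 3/4) by nra.
      assert (Hbb : - b > 1/2) by nra.
      assert (x * a > s / 2) by nra.
      assert (Hx0 : x > 0) by nra.
      assert (h * a * x <= x * x) by nra.
      assert (h * (s / 2) <= x * x) by nra.
      assert (x * x <= M * M * s * s) by nra.
      assert (h <= 2 * M * M * s) by nra.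
      nra.
Qed.

Section Part4.
Variable K : pt -> Prop.
Hypothesis HK : convex_domain K.

Lemma iv_core zeta m n : boundary K zeta -> outer_normal K zeta m -> outer_normal K zeta n -> dot n m = 0 ->
  (forall s, 0 < s -> ~ K (padd zeta (pscale (- s) m))) -> depth K = 0.
Proof.
  intros Bz Nm Nn Hnm Hray.
  assert (Um : dot m m = 1) by (apply pnorm1; apply Nm).
  assert (Un : dot n n = 1) by (apply pnorm1; apply Nn).
  destruct (orth_perp n m Un Um Hnm) as (sg & Hsg & Em).
  assert (Par : forall u v, dot u v = dot u m * dot v m + dot u n * dot v n).
  { intros u v. rewrite Em. apply parseval; auto. }
  assert (Ef : forall u, fst u = dot u m * fst m + dot u n * fst n).
  { intros u. rewrite Em. apply expand_fst; auto. }
  assert (Es : forall u, snd u = dot u m * snd m + dot u n * snd n).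
  { intros u. rewrite Em. apply expand_snd; auto. }
  assert (Hmn : dot m n = 0) by (rewrite dot_comm; auto).
  assert (Wedge : forall z, K z -> dot (psub z zeta) m <= 0 /\ dot (psub z zeta) n <= 0).
  { intros z Kz. split; [apply Nm|apply Nn]; auto. }
  destruct (Kball K HK) as (c & rho & Hr & Hb).
  assert (Kc : K c) by (apply Hb; rewrite dot_psub_self; nra).
  set (Xc := - dot (psub c zeta) m). set (Yc := - dot (psub c zeta) n).
  assert (HXc : rho / 2 <= Xc) by (pose proof (normal_strict K zeta m c rho Nm Hr Hb); unfold Xc; lra).
  assert (HYc : rho / 2 <= Yc) by (pose proof (normal_strict K zeta n c rho Nn Hr Hb); unfold Yc; lra).
  set (M := Xc / Yc).
  assert (HM : 0 <= M) by (unfold M; apply Rlt_le, Rdiv_lt_0_compat; lra).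
  apply (depth_zero K). intros eps Heps.
  set (dl := eps / 4).
  assert (Hdl : 0 < dl) by (unfold dl; lra).
  destruct (Kclosed K HK _ (Hray dl Hdl)) as (r1 & Hr1 & Hball).
  assert (Cone : forall y, K y -> dl <= - dot (psub y zeta) m ->
            r1 * (- dot (psub y zeta) m) <= dl * (- dot (psub y zeta) n)).
  { intros y Ky Hy. set (Xy := - dot (psub y zeta) m) in *. set (Yy := - dot (psub y zeta) n).
    apply Rnot_lt_le; intro Hlt.
    set (lam := dl / Xy).
    assert (Hlam : 0 < lam <= 1).
    { unfold lam; split. apply Rdiv_lt_0_compat; lra. apply (Rmult_le_reg_r Xy); [lra|].
      unfold Rdiv; rewrite Rmult_assoc, Rinv_l; lra. }
    set (w := padd zeta (pscale lam (psub y zeta))).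
    assert (Kw : K w). { apply (Kconv K HK zeta y lam); [apply Bz|exact Ky|lra| |]; unfold w; simpl; ring. }
    apply (Hball w); auto. apply dist_lt; auto.
    set (a1 := padd zeta (pscale (- dl) m)).
    assert (D1 : dot (psub w a1) m = 0).
    { unfold w, a1. replace (dot (psub (padd zeta (pscale lam (psub y zeta))) (padd zeta (pscale (- dl) m))) m)
        with (lam * dot (psub y zeta) m + dl * dot m m) by (unfold dot, psub, padd, pscale; simpl; ring).
      rewrite Um. unfold lam. unfold Xy in *. field. lra. }
    assert (D2 : dot (psub w a1) n = - (lam * Yy)).
    { unfold w, a1. replace (dot (psub (padd zeta (pscale lam (psub y zeta))) (padd zeta (pscale (- dl) m))) n)
        with (lam * dot (psub y zeta) n + dl * dot m n) by (unfold dot, psub, padd, pscale; simpl; ring).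
      rewrite Hmn. unfold Yy. ring. }
    rewrite (Par (psub w a1) (psub w a1)), D1, D2.
    assert (lam * Yy < r1).
    { assert (lam * Xy = dl) by (unfold lam; field; lra).
      assert (lam * Yy * Xy < r1 * Xy) by nra. nra. }
    assert (0 <= lam * Yy) by (unfold Yy; pose proof (Wedge y Ky); nra).
    nra. }
  set (s := Rmin (Rmin Yc r1) (eps / (4 + 4 * M + 4 * M * M))).
  assert (Hden : 0 < 4 + 4 * M + 4 * M * M) by nra.
  assert (Hs : 0 < s).
  { unfold s. apply Rmin_glb_lt; [apply Rmin_glb_lt; lra|]. apply Rdiv_lt_0_compat; lra. }
  assert (HsY : s <= Yc) by (unfold s; pose proof (Rmin_l (Rmin Yc r1) (eps / (4 + 4 * M + 4 * M * M))); pose proof (Rmin_l Yc r1); lra).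
  assert (Hsr : s <= r1) by (unfold s; pose proof (Rmin_l (Rmin Yc r1) (eps / (4 + 4 * M + 4 * M * M))); pose proof (Rmin_r Yc r1); lra).
  assert (Hse : s * (4 + 4 * M + 4 * M * M) <= eps).
  { assert (s <= eps / (4 + 4 * M + 4 * M * M)) by apply Rmin_r.
    apply (Rmult_le_compat_r (4 + 4 * M + 4 * M * M)) in H; [|lra].
    replace (eps / (4 + 4 * M + 4 * M * M) * (4 + 4 * M + 4 * M * M)) with eps in H by (field; lra). auto. }
  set (b0 := padd zeta (pscale (- s) n)). set (d := pscale (-1) m).
  assert (Pm : forall X, dot (psub (padd b0 (pscale X d)) zeta) m = - X).
  { intros X. unfold b0, d. replace (dot (psub (padd (padd zeta (pscale (- s) n)) (pscale X (pscale (-1) m))) zeta) m)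
      with (- s * dot n m - X * dot m m) by (unfold dot, psub, padd, pscale; simpl; ring). rewrite Hnm, Um. ring. }
  assert (Pn : forall X, dot (psub (padd b0 (pscale X d)) zeta) n = - s).
  { intros X. unfold b0, d. replace (dot (psub (padd (padd zeta (pscale (- s) n)) (pscale X (pscale (-1) m))) zeta) n)
      with (- s * dot n n - X * dot m n) by (unfold dot, psub, padd, pscale; simpl; ring). rewrite Hmn, Un. ring. }
  set (lam := s / Yc).
  assert (Hlam : 0 < lam <= 1).
  { unfold lam; split. apply Rdiv_lt_0_compat; lra. apply (Rmult_le_reg_r Yc); [lra|].
    unfold Rdiv; rewrite Rmult_assoc, Rinv_l; lra. }
  assert (Kl : K (padd b0 (pscale (lam * Xc) d))).
  { apply (Kconv K HK zeta c lam); [apply Bz|exact Kc|lra| |].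
    - assert (Ec1 : fst c = fst zeta + ((- Xc) * fst m + (- Yc) * fst n)).
      { pose proof (Ef (psub c zeta)) as HH. unfold Xc, Yc. cbn [fst snd psub] in HH. lra. }
      assert (Hs' : lam * Yc = s) by (unfold lam; field; lra).
      unfold b0, d, padd, pscale; cbn [fst snd]. rewrite Ec1, <- Hs'. ring.
    - assert (Ec1 : snd c = snd zeta + ((- Xc) * snd m + (- Yc) * snd n)).
      { pose proof (Es (psub c zeta)) as HH. unfold Xc, Yc. cbn [fst snd psub] in HH. lra. }
      assert (Hs' : lam * Yc = s) by (unfold lam; field; lra).
      unfold b0, d, padd, pscale; cbn [fst snd]. rewrite Ec1, <- Hs'. ring. }
  destruct (line_min K HK b0 d) as (x & Kp & Hmin & Bp).
  { replace (dot d d) with (dot m m) by (unfold d, dot, pscale; cbn [fst snd]; ring). lra. }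
  { eauto. }
  { exists 0. intros X KX. destruct (Wedge _ KX) as [W _]. rewrite Pm in W. lra. }
  assert (HxM : x <= M * s).
  { specialize (Hmin _ Kl). replace (M * s) with (lam * Xc); auto. unfold M, lam. field. lra. }
  assert (Hx0 : 0 <= x). { destruct (Wedge _ Kp) as [W _]. rewrite Pm in W. lra. }
  set (p := padd b0 (pscale x d)) in *.
  exists p. split; auto.
  apply (ld_le K); [lra|]. intros nu h Hnu Hh Kq.
  pose proof Hnu as [Nnu Hnup]. apply pnorm1 in Nnu.
  set (a := - dot nu m). set (b := - dot nu n).
  assert (Hab : a * a + b * b = 1) by (rewrite Par in Nnu; unfold a, b; lra).
  assert (Hz : dot (psub zeta p) nu <= 0) by (apply Hnup; apply Bz).
  assert (Hpn : x * a + s * b >= 0).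
  { assert (dot (psub p zeta) nu = - dot (psub zeta p) nu) by (unfold dot, psub; simpl; ring).
    rewrite Par in H. unfold p in H, Hz. rewrite Pm, Pn in H. unfold a, b. lra. }
  destruct (Wedge _ Kq) as [Q1 Q2]. rewrite (dot_shift p (-h) nu zeta m) in Q1. rewrite (dot_shift p (-h) nu zeta n) in Q2.
  unfold p in Q1, Q2. rewrite Pm in Q1. rewrite Pn in Q2.
  pose proof (Cone _ Kq) as Cq. rewrite (dot_shift p (-h) nu zeta m), (dot_shift p (-h) nu zeta n) in Cq.
  unfold p in Cq. rewrite Pm, Pn in Cq.
  apply (iv_alg M r1 dl eps s x h a b); auto; try (unfold a, b; lra).
Qed.

End Part4.

Lemma epsn_le1 n : epsn n <= 1.
Proof. pose proof (epsn_le 0 n ltac:(lia)). unfold epsn in *. simpl in *. rewrite Rinv_1 in H. auto. Qed.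

Section Part4b.
Variable K : pt -> Prop.
Hypothesis HK : convex_domain K.

Lemma orth_normals zeta : Omega K zeta = PI / 2 ->
  exists nu mu, outer_normal K zeta nu /\ outer_normal K zeta mu /\ dot nu mu = 0.
Proof.
  intros HO. pose proof PI2_3_2.
  assert (Hp : forall n, exists w : pt * pt, outer_normal K zeta (fst w) /\ outer_normal K zeta (snd w) /\
        0 <= dot (fst w) (snd w) <= epsn n).
  { intros n. pose proof (epsn_pos n). pose proof (epsn_le1 n).
    destruct (Omega_gt K zeta (PI / 2 - epsn n)) as (t1 & t2 & [H12 Hint] & Hl); [lra|lra|].
    exists ((cos t1, sin t1), (cos (t1 + (PI / 2 - epsn n)), sin (t1 + (PI / 2 - epsn n)))). simpl.
    split; [apply Hint; lra|]. split; [apply Hint; lra|].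
    unfold dot; simpl. rewrite (Rmult_comm (cos t1)), (Rmult_comm (sin t1)), <- cos_minus.
    replace (t1 + (PI / 2 - epsn n) - t1) with (PI / 2 - epsn n) by ring. rewrite cos_shift.
    split. apply sin_ge_0; lra. left; apply sin_lt_x; auto. }
  apply my_choice in Hp. destruct Hp as [w Hw].
  destruct (BWpt (fun n => fst (w n)) 1) as (phi1 & Hp1 & nu & Hnu).
  { intros n. destruct (Hw n) as ([Hn _] & _). apply pnorm1 in Hn. unfold dot in Hn.
    split; apply Rabs_le; split; nra. }
  destruct (BWpt (fun n => snd (w (phi1 n))) 1) as (phi2 & Hp2 & mu & Hmu).
  { intros n. destruct (Hw (phi1 n)) as (_ & [Hn _] & _). apply pnorm1 in Hn. unfold dot in Hn.
    split; apply Rabs_le; split; nra. }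
  set (phi := fun n => phi1 (phi2 n)).
  assert (Hphi : incr phi) by (unfold phi; apply incr_comp; auto).
  assert (Cnu : cvp (fun n => fst (w (phi n))) nu).
  { apply (cvp_sub (fun n => fst (w (phi1 n))) nu phi2); auto. }
  exists nu, mu. split; [|split].
  - apply (normal_limit K (fun _ => zeta) (fun n => fst (w (phi n)))); auto. intros n; apply Hw. apply cvp_const.
  - apply (normal_limit K (fun _ => zeta) (fun n => snd (w (phi n)))); auto. intros n; apply Hw. apply cvp_const.
  - pose proof (cv_dot _ _ _ _ Cnu Hmu) as Hc.
    apply Rle_antisym.
    + apply Rnot_lt_le; intro Hlt.
      assert (dot nu mu <= dot nu mu / 2).
      { apply (cv_le_ev _ _ _ Hc). assert (Hpos : 0 < dot nu mu / 2) by lra.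
        destruct (epsn_small _ Hpos) as [N HN].
        exists N. intros n Hn. destruct (Hw (phi n)) as (_ & _ & _ & H1).
        pose proof (epsn_le n (phi n) (incr_ge phi Hphi n)). specialize (HN n Hn). unfold phi in *. lra. }
      lra.
    + assert (- dot nu mu <= 0).
      { apply (cv_le (fun n => - dot (fst (w (phi n))) (snd (w (phi n))))).
        apply CV_opp; auto. intros n. destruct (Hw (phi n)) as (_ & _ & H1 & _). lra. }
      lra.
Qed.

Lemma seg_vertex zeta m n r : boundary K zeta -> outer_normal K zeta m -> outer_normal K zeta n -> dot n m = 0 ->
  0 < r -> K (padd zeta (pscale (- r) m)) -> K (padd zeta (pscale (- r) n)) -> two_segment_vertex K zeta.
Proof.
  intros Bz Nm Nn Hnm Hr Km Kn.
  assert (Um : dot m m = 1) by (apply pnorm1; apply Nm).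
  assert (Un : dot n n = 1) by (apply pnorm1; apply Nn).
  destruct (orth_perp n m Un Um Hnm) as (sg & Hsg & Em).
  assert (Par : forall u v, dot u v = dot u m * dot v m + dot u n * dot v n).
  { intros u v. rewrite Em. apply parseval; auto. }
  assert (Ef : forall u, fst u = dot u m * fst m + dot u n * fst n).
  { intros u. rewrite Em. apply expand_fst; auto. }
  assert (Es : forall u, snd u = dot u m * snd m + dot u n * snd n).
  { intros u. rewrite Em. apply expand_snd; auto. }
  assert (Hmn : dot m n = 0) by (rewrite dot_comm; auto).
  assert (Wedge : forall z, K z -> dot (psub z zeta) m <= 0 /\ dot (psub z zeta) n <= 0).
  { intros z Kz. split; [apply Nm|apply Nn]; auto. }
  exists (r / 4), (pscale (-1) m), (pscale (-1) n). split; [lra|]. split.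
  { apply pnorm1. unfold dot, pscale in *; simpl. lra. } split.
  { apply pnorm1. unfold dot, pscale in *; simpl. lra. }
  assert (Tri : forall q, 0 <= - dot (psub q zeta) m -> 0 <= - dot (psub q zeta) n ->
            - dot (psub q zeta) m - dot (psub q zeta) n <= r -> K q).
  { intros q H1 H2 H3. set (X := - dot (psub q zeta) m) in *. set (Y := - dot (psub q zeta) n) in *.
    assert (Eq1 : fst q = fst zeta + (- X) * fst m + (- Y) * fst n).
    { pose proof (Ef (psub q zeta)) as HH. cbn [fst snd psub] in HH. unfold X, Y. lra. }
    assert (Eq2 : snd q = snd zeta + (- X) * snd m + (- Y) * snd n).
    { pose proof (Es (psub q zeta)) as HH. cbn [fst snd psub] in HH. unfold X, Y. lra. }
    destruct (Req_dec (X + Y) 0) as [H0|H0].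
    - assert (X = 0) by lra. assert (Y = 0) by lra.
      replace q with zeta; [apply Bz|]. apply pt_eq; [rewrite Eq1|rewrite Eq2]; rewrite H, H4; ring.
    - set (S := X + Y). assert (HS : 0 < S) by (unfold S; lra).
      set (Mp := padd (pscale (1 - Y / S) (padd zeta (pscale (- r) m))) (pscale (Y / S) (padd zeta (pscale (- r) n)))).
      assert (KM : K Mp).
      { apply (Kconv K HK _ _ (Y / S) Mp Km Kn); [|unfold Mp; simpl; ring|unfold Mp; simpl; ring].
        split. apply Rmult_le_pos; [lra|apply Rlt_le, Rinv_0_lt_compat; lra].
        apply (Rmult_le_reg_r S); auto. unfold Rdiv; rewrite Rmult_assoc, Rinv_l; unfold S in *; lra. }
      apply (Kconv K HK zeta Mp (S / r)); [apply Bz|exact KM| | |].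
      + split. apply Rmult_le_pos; [lra|apply Rlt_le, Rinv_0_lt_compat; lra].
        apply (Rmult_le_reg_r r); auto. unfold Rdiv; rewrite Rmult_assoc, Rinv_l; unfold S, X, Y in *; lra.
      + rewrite Eq1. unfold Mp, S; simpl. field. split; lra.
      + rewrite Eq2. unfold Mp, S; simpl. field. split; lra. }
  intros p Hp. apply dist_lt_inv in Hp.
  rewrite (Par (psub p zeta) (psub p zeta)) in Hp.
  set (X := - dot (psub p zeta) m) in *. set (Y := - dot (psub p zeta) n) in *.
  assert (EpX : fst p = fst zeta + (- X) * fst m + (- Y) * fst n).
  { pose proof (Ef (psub p zeta)) as HH. cbn [fst snd psub] in HH. unfold X, Y. lra. }
  assert (EpY : snd p = snd zeta + (- X) * snd m + (- Y) * snd n).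
  { pose proof (Es (psub p zeta)) as HH. cbn [fst snd psub] in HH. unfold X, Y. lra. }
  split.
  - intros [Kp Hint]. destruct (Wedge p Kp) as [W1 W2]. fold X Y in W1, W2.
    assert (Hp' : X * X + Y * Y < r / 4 * (r / 4)) by (unfold X, Y; nra).
    assert (HX4 : X <= r / 4) by nra. assert (HY4 : Y <= r / 4) by nra.
    destruct (Req_dec Y 0) as [HY|HY].
    + exists X. split; [unfold X; lra|]. left. apply pt_eq; simpl; [rewrite EpX|rewrite EpY]; rewrite HY; ring.
    + destruct (Req_dec X 0) as [HX|HX].
      * exists Y. split; [unfold Y; lra|]. right. apply pt_eq; simpl; [rewrite EpX|rewrite EpY]; rewrite HX; ring.
      * exfalso. apply Hint.
        assert (X > 0) by (unfold X in *; lra). assert (Y > 0) by (unfold Y in *; lra).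
        set (rr := Rmin (Rmin X Y) (r / 4)).
        assert (Hrr : 0 < rr) by (unfold rr; repeat apply Rmin_glb_lt; lra).
        assert (HrX : rr <= X) by (unfold rr; pose proof (Rmin_l (Rmin X Y) (r/4)); pose proof (Rmin_l X Y); lra).
        assert (HrY : rr <= Y) by (unfold rr; pose proof (Rmin_l (Rmin X Y) (r/4)); pose proof (Rmin_r X Y); lra).
        assert (Hr4 : rr <= r / 4) by (unfold rr; apply Rmin_r).
        exists rr. split; auto. intros q Hq. apply dist_lt_inv in Hq.
        rewrite (Par (psub q p) (psub q p)) in Hq.
        assert (Dm : dot (psub q zeta) m = dot (psub q p) m - X) by (unfold X, dot, psub; simpl; ring).
        assert (Dn : dot (psub q zeta) n = dot (psub q p) n - Y) by (unfold Y, dot, psub; simpl; ring).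
        assert (A1 : dot (psub q p) m * dot (psub q p) m < rr * rr).
        { pose proof (Rle_0_sqr (dot (psub q p) n)). unfold Rsqr in *. lra. }
        assert (A2 : dot (psub q p) n * dot (psub q p) n < rr * rr).
        { pose proof (Rle_0_sqr (dot (psub q p) m)). unfold Rsqr in *. lra. }
        assert (B1 : Rabs (dot (psub q p) m) < rr).
        { apply Rsqr_lt_abs_1 in A1 || idtac. rewrite <- (Rabs_right rr) by lra.
          apply Rsqr_lt_abs_0. unfold Rsqr; lra. }
        assert (B2 : Rabs (dot (psub q p) n) < rr).
        { rewrite <- (Rabs_right rr) by lra. apply Rsqr_lt_abs_0. unfold Rsqr; lra. }
        apply Rabs_def2 in B1. apply Rabs_def2 in B2.
        apply Tri; rewrite ?Dm, ?Dn; lra.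
  - intros (s & Hs & [Ep|Ep]).
    + assert (L1 : forall w, dot (psub p zeta) w = - s * dot m w).
      { intros w; rewrite Ep; unfold dot, psub, padd, pscale; simpl; ring. }
      assert (Xs : X = s /\ Y = 0) by (unfold X, Y; rewrite !L1, Um, Hmn; split; ring).
      destruct Xs as [HXs HYs].
      assert (Kp : K p).
      { rewrite !L1, Um, Hmn in Hp. apply Tri; rewrite !L1, ?Um, ?Hmn; nra. }
      split; auto. intros [r0 [Hr0 Hb0]].
      assert (Kq : K (padd p (pscale (r0 / 2) n))).
      { apply Hb0. apply dist_lt; auto. unfold dot, psub, padd, pscale in *; simpl. nra. }
      destruct (Wedge _ Kq) as [_ W]. rewrite dot_shift, Un, L1, Hmn in W. lra.
    + assert (L1 : forall w, dot (psub p zeta) w = - s * dot n w).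
      { intros w; rewrite Ep; unfold dot, psub, padd, pscale; simpl; ring. }
      assert (Xs : X = 0 /\ Y = s) by (unfold X, Y; rewrite !L1, Un, Hnm; split; ring).
      destruct Xs as [HXs HYs].
      assert (Kp : K p).
      { rewrite !L1, Un, Hnm in Hp. apply Tri; rewrite !L1, ?Un, ?Hnm; nra. }
      split; auto. intros [r0 [Hr0 Hb0]].
      assert (Kq : K (padd p (pscale (r0 / 2) m))).
      { apply Hb0. apply dist_lt; auto. unfold dot, psub, padd, pscale in *; simpl. nra. }
      destruct (Wedge _ Kq) as [W _]. rewrite dot_shift, Um, L1, Hnm in W. lra.
Qed.

Lemma part4 zeta : boundary K zeta -> Omega K zeta = PI / 2 -> ~ two_segment_vertex K zeta -> depth K = 0.
Proof.
  intros Bz HO Hnt.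
  destruct (orth_normals zeta HO) as (nu & mu & N1 & N2 & Hd).
  assert (Hd' : dot mu nu = 0) by (rewrite dot_comm; auto).
  assert (Ray : forall r, 0 < r -> ~ K (padd zeta (pscale (- r) mu)) \/ ~ K (padd zeta (pscale (- r) nu))).
  { intros r Hr. apply NNPP; intro H. apply Hnt. apply not_or_and in H. destruct H as [H1 H2].
    apply NNPP in H1. apply NNPP in H2. apply (seg_vertex zeta mu nu r Bz N2 N1 Hd Hr H1 H2). }
  assert (Mono : forall v s1 s2, 0 < s1 <= s2 -> K (padd zeta (pscale (- s2) v)) -> K (padd zeta (pscale (- s1) v))).
  { intros v s1 s2 Hs Kv. apply (Kconv K HK zeta _ (s1 / s2) _ (proj1 Bz) Kv).
    - split. apply Rmult_le_pos; [lra|apply Rlt_le, Rinv_0_lt_compat; lra].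
      apply (Rmult_le_reg_r s2); [lra|]. unfold Rdiv; rewrite Rmult_assoc, Rinv_l; lra.
    - simpl. field. lra.
    - simpl. field. lra. }
  destruct (classic (forall s, 0 < s -> ~ K (padd zeta (pscale (- s) mu)))) as [HA|HA].
  - apply (iv_core K HK zeta mu nu Bz N2 N1 Hd HA).
  - destruct (classic (forall s, 0 < s -> ~ K (padd zeta (pscale (- s) nu)))) as [HB|HB].
    + apply (iv_core K HK zeta nu mu Bz N1 N2 Hd' HB).
    + exfalso. apply not_all_ex_not in HA. destruct HA as [s1 HA]. apply imply_to_and in HA. destruct HA as [Hs1 HA].
      apply NNPP in HA.
      apply not_all_ex_not in HB. destruct HB as [s2 HB]. apply imply_to_and in HB. destruct HB as [Hs2 HB].
      apply NNPP in HB.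
      set (r := Rmin s1 s2).
      assert (Hr : 0 < r) by (unfold r; apply Rmin_glb_lt; lra).
      destruct (Ray r Hr) as [H|H]; apply H.
      * apply (Mono mu r s1); auto. split; auto. apply Rmin_l.
      * apply (Mono nu r s2); auto. split; auto. apply Rmin_r.
Qed.

End Part4b.

Lemma two_unit_perp u x y : dot u u = 1 -> dot x x = 1 -> dot y y = 1 -> dot u x = 0 -> dot u y = 0 ->
  dot x y * dot x y = 1.
Proof.
  intros Hu Hx Hy Hux Huy.
  destruct (orth_perp u x Hu Hx Hux) as (s1 & H1 & ->).
  destruct (orth_perp u y Hu Hy Huy) as (s2 & H2 & ->).
  unfold dot, perp in *; simpl in *.
  transitivity ((s1 * s1) * (s2 * s2) * ((fst u * fst u + snd u * snd u) * (fst u * fst u + snd u * snd u))); [ring|].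
  rewrite H1, H2, Hu. ring.
Qed.

Lemma basis2 u v w : dot u u = 1 -> dot v v = 1 -> dot u v * dot u v < 1 ->
  let g := dot u v in
  let al := (dot w u - g * dot w v) / (1 - g * g) in
  let be := (dot w v - g * dot w u) / (1 - g * g) in
  fst w = al * fst u + be * fst v /\ snd w = al * snd u + be * snd v.
Proof.
  intros Hu Hv Hg g al be.
  assert (Hd : 0 < 1 - g * g) by (unfold g; lra).
  set (x1 := fst w - (al * fst u + be * fst v)). set (x2 := snd w - (al * snd u + be * snd v)).
  assert (E1 : x1 * fst u + x2 * snd u = dot w u - al * dot u u - be * dot u v)
    by (unfold x1, x2, dot; ring).
  assert (E2 : x1 * fst v + x2 * snd v = dot w v - al * dot u v - be * dot v v)
    by (unfold x1, x2, dot; ring).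
  rewrite Hu in E1. rewrite Hv in E2. fold g in E1, E2.
  assert (A1 : al + be * g = dot w u) by (unfold al, be; field; lra).
  assert (A2 : al * g + be = dot w v) by (unfold al, be; field; lra).
  assert (E1' : x1 * fst u + x2 * snd u = 0) by lra.
  assert (E2' : x1 * fst v + x2 * snd v = 0) by lra.
  clear E1 E2.
  set (det := fst u * snd v - snd u * fst v).
  assert (Hdet : det * det = 1 - g * g).
  { unfold det, g, dot in *. transitivity ((fst u * fst u + snd u * snd u) * (fst v * fst v + snd v * snd v) -
      (fst u * fst v + snd u * snd v) * (fst u * fst v + snd u * snd v)); [ring|]. rewrite Hu, Hv. ring. }
  assert (Hdet0 : det <> 0) by (intro H0; rewrite H0 in Hdet; lra).
  assert (X1 : x1 * det = 0).
  { unfold det. transitivity ((x1 * fst u + x2 * snd u) * snd v - (x1 * fst v + x2 * snd v) * snd u); [ring|]. rewrite E1', E2'; ring. }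
  assert (X2 : x2 * det = 0).
  { unfold det. transitivity ((x1 * fst v + x2 * snd v) * fst u - (x1 * fst u + x2 * snd u) * fst v); [ring|]. rewrite E1', E2'; ring. }
  apply Rmult_integral in X1. apply Rmult_integral in X2.
  destruct X1 as [X1|X1]; [|contradiction]. destruct X2 as [X2|X2]; [|contradiction].
  unfold x1, x2 in *. split; lra.
Qed.

Section Part3.
Variable K : pt -> Prop.
Hypothesis HK : convex_domain K.

Lemma Tri2 z u v R a b q : K z -> K (padd z (pscale R u)) -> K (padd z (pscale R v)) -> 0 < R ->
  0 <= a -> 0 <= b -> a + b <= R ->
  fst q = fst z + a * fst u + b * fst v -> snd q = snd z + a * snd u + b * snd v -> K q.
Proof.
  intros Kz Ku Kv HR Ha Hb Hab E1 E2.
  destruct (Req_dec (a + b) 0) as [H0|H0].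
  - assert (a = 0) by lra. assert (b = 0) by lra. subst.
    replace q with z; auto. apply pt_eq; [rewrite E1|rewrite E2]; ring.
  - set (S := a + b). assert (HS : 0 < S) by (unfold S; lra).
    set (Mp := padd (pscale (1 - b / S) (padd z (pscale R u))) (pscale (b / S) (padd z (pscale R v)))).
    assert (KM : K Mp).
    { apply (Kconv K HK _ _ (b / S) Mp Ku Kv); [|unfold Mp; simpl; ring|unfold Mp; simpl; ring].
      split. apply Rmult_le_pos; [lra|apply Rlt_le, Rinv_0_lt_compat; lra].
      apply (Rmult_le_reg_r S); auto. unfold Rdiv; rewrite Rmult_assoc, Rinv_l; unfold S in *; lra. }
    apply (Kconv K HK z Mp (S / R)); [exact Kz|exact KM| | |].
    + split. apply Rmult_le_pos; [lra|apply Rlt_le, Rinv_0_lt_compat; lra].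
      apply (Rmult_le_reg_r R); auto. unfold Rdiv; rewrite Rmult_assoc, Rinv_l; unfold S in *; lra.
    + rewrite E1. unfold Mp, S; simpl. field. split; lra.
    + rewrite E2. unfold Mp, S; simpl. field. split; lra.
Qed.

Lemma interior_seg y rho x lam z : 0 < rho -> (forall q, dot (psub q y) (psub q y) < rho * rho -> K q) ->
  K x -> 0 <= lam < 1 -> fst z = (1 - lam) * fst y + lam * fst x -> snd z = (1 - lam) * snd y + lam * snd x ->
  interior K z.
Proof.
  intros Hr Hb Kx Hl E1 E2. exists ((1 - lam) * rho). split; [nra|].
  intros q Hq. apply dist_lt_inv in Hq.
  set (y' := pscale (/ (1 - lam)) (padd q (pscale (- lam) x))).
  assert (Ky' : K y').
  { apply Hb. set (c := / (1 - lam)).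
    assert (Hc : c * (1 - lam) = 1) by (unfold c; field; lra).
    assert (Hc0 : 0 < c) by (unfold c; apply Rinv_0_lt_compat; lra).
    assert (F1 : fst y' - fst y = c * (fst q - fst z)) by (unfold y', c; simpl; rewrite E1; field; lra).
    assert (F2 : snd y' - snd y = c * (snd q - snd z)) by (unfold y', c; simpl; rewrite E2; field; lra).
    unfold dot, psub in *. cbn [fst snd] in *. rewrite F1, F2.
    set (A := fst q - fst z) in *. set (B := snd q - snd z) in *.
    assert (c * c * (A * A + B * B) < c * c * ((1 - lam) * rho * ((1 - lam) * rho))) by (apply Rmult_lt_compat_l; nra).
    replace (c * c * ((1 - lam) * rho * ((1 - lam) * rho))) with ((c * (1 - lam)) * (c * (1 - lam)) * (rho * rho)) in H by ring.
    rewrite Hc in H. nra. }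
  apply (Kconv K HK y' x lam); auto; try lra.
  - unfold y', padd, pscale; simpl. field. lra.
  - unfold y', padd, pscale; simpl. field. lra.
Qed.

Lemma line_lower b0 d : dot d d > 0 -> exists L, forall X, K (padd b0 (pscale X d)) -> L <= X.
Proof.
  intros Hd. destruct (Kbound K HK) as (M & HM0 & HM).
  set (B := (M + Rabs (fst b0)) * Rabs (fst d) + (M + Rabs (snd b0)) * Rabs (snd d)).
  exists (- B / dot d d). intros X KX. destruct (HM _ KX) as [H1 H2]. simpl in H1, H2.
  assert (E : X * dot d d = (fst b0 + X * fst d - fst b0) * fst d + (snd b0 + X * snd d - snd b0) * snd d)
    by (unfold dot; ring).
  assert (G : forall a b c, Rabs a <= M -> - ((M + Rabs b) * Rabs c) <= (a - b) * c).
  { intros a b c Ha. pose proof (Rle_abs (- ((a - b) * c))). rewrite Rabs_Ropp, Rabs_mult in H.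
    pose proof (Rabs_triang a (- b)). rewrite Rabs_Ropp in H0.
    assert (Rabs (a - b) <= M + Rabs b) by (unfold Rminus; lra).
    assert (Rabs (a - b) * Rabs c <= (M + Rabs b) * Rabs c) by (apply Rmult_le_compat_r; [apply Rabs_pos|auto]).
    lra. }
  pose proof (G _ (fst b0) (fst d) H1). pose proof (G _ (snd b0) (snd d) H2).
  assert (- B <= X * dot d d) by (rewrite E; unfold B; lra).
  apply (Rmult_le_reg_r (dot d d)); [lra|]. unfold Rdiv. rewrite Rmult_assoc, Rinv_l; lra.
Qed.

End Part3.

Section Part3b.
Variable K : pt -> Prop.
Hypothesis HK : convex_domain K.

Lemma chord_lb z u v nu R s : dot u u = 1 -> dot v v = 1 -> dot u v * dot u v < 1 -> dot u v <= 0 ->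
  0 < R -> K z -> K (padd z (pscale R u)) -> K (padd z (pscale R v)) ->
  outer_normal K z nu -> dot nu u = 0 -> dot nu v < 0 -> 0 <= s < R / 2 ->
  R * (1 + dot u v) / 2 <= local_depth K (padd z (pscale s u)).
Proof.
  intros Uu Uv Hg Hg0 HR Kz KRu KRv Nnu Hnu Hnv Hs.
  set (g := dot u v) in *. set (p := padd z (pscale s u)).
  assert (Hg1 : -1 < g) by nra.
  assert (Np : outer_normal K p nu).
  { destruct Nnu as [Nn Hn]. split; auto. intros y Ky. specialize (Hn y Ky).
    replace (dot (psub y p) nu) with (dot (psub y z) nu - s * dot nu u) by (unfold p, dot, psub, padd, pscale; simpl; ring).
    rewrite Hnu. lra. }
  assert (Kp : K p).
  { apply (Kconv K HK z (padd z (pscale R u)) (s / R)); auto.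
    - split. apply Rmult_le_pos; [lra|apply Rlt_le, Rinv_0_lt_compat; lra].
      apply (Rmult_le_reg_r R); auto. unfold Rdiv; rewrite Rmult_assoc, Rinv_l; lra.
    - unfold p; simpl; field; lra.
    - unfold p; simpl; field; lra. }
  destruct (chord_exists K HK p nu Kp Np) as (h & Hh & Hc).
  assert (Hld : h <= local_depth K p) by (apply (ld_ge K HK); exists nu; auto).
  set (c0 := R * (1 + g) / 2).
  enough (K (padd p (pscale (- c0) nu))) by (apply Hc in H; lra).
  destruct (basis2 u v nu Uu Uv Hg) as [B1 B2]. fold g in B1, B2.
  set (al := (dot nu u - g * dot nu v) / (1 - g * g)) in *.
  set (be := (dot nu v - g * dot nu u) / (1 - g * g)) in *.
  assert (Hd : 0 < 1 - g * g) by lra.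
  assert (Hal : al = - g * dot nu v / (1 - g * g)) by (unfold al; rewrite Hnu; field; lra).
  assert (Hbe : be = dot nu v / (1 - g * g)) by (unfold be; rewrite Hnu; field; lra).
  assert (Nnv : -1 <= dot nu v).
  { apply unit_dot_bound; auto. apply pnorm1; apply Nnu. }
  apply (Tri2 K HK z u v R (s - c0 * al) (- c0 * be)); auto.
  - assert (Hc0 : 0 <= c0) by (unfold c0; nra).
    assert (0 <= - al).
    { replace (- al) with ((g * dot nu v) / (1 - g * g)) by (rewrite Hal; field; lra).
      unfold Rdiv; apply Rmult_le_pos; [nra|apply Rlt_le, Rinv_0_lt_compat; lra]. }
    nra.
  - assert (Hc0 : 0 <= c0) by (unfold c0; nra).
    assert (0 <= - be).
    { replace (- be) with ((- dot nu v) / (1 - g * g)) by (rewrite Hbe; field; lra).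
      unfold Rdiv; apply Rmult_le_pos; [lra|apply Rlt_le, Rinv_0_lt_compat; lra]. }
    nra.
  - assert (E : s - c0 * al + - c0 * be = s + R * (- dot nu v) / 2).
    { rewrite Hal, Hbe. unfold c0. field. lra. }
    rewrite E. nra.
  - unfold p; simpl. rewrite B1. ring.
  - unfold p; simpl. rewrite B2. ring.
Qed.

Lemma deg_opp z u v r : dot u u = 1 -> 0 < r -> fst v = - fst u -> snd v = - snd u ->
  K (padd z (pscale r u)) -> K (padd z (pscale r v)) -> Omega K z = PI / 2 -> False.
Proof.
  intros Uu Hr E1 E2 Ku Kv HO. pose proof PI2_3_2 as Hpi.
  destruct (Omega_gt K z (PI / 4)) as (t1 & t2 & [H12 Hint] & Hl); [lra|lra|].
  assert (Perp : forall t, t1 <= t <= t2 -> dot u (cos t, sin t) = 0).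
  { intros t Ht. destruct (Hint t Ht) as [_ Hn]. pose proof (Hn _ Ku). pose proof (Hn _ Kv).
    unfold dot, psub, padd, pscale in *; simpl in *. rewrite E1, E2 in H0. nra. }
  assert (U : forall t, dot (cos t, sin t) (cos t, sin t) = 1).
  { intros t. unfold dot; simpl. pose proof (sin2_cos2 t). unfold Rsqr in H. lra. }
  pose proof (two_unit_perp u (cos t1, sin t1) (cos (t1 + PI/4), sin (t1 + PI/4)) Uu (U _) (U _)
    (Perp t1 ltac:(lra)) (Perp (t1 + PI/4) ltac:(lra))) as H.
  unfold dot in H; simpl in H.
  rewrite (Rmult_comm (cos t1)), (Rmult_comm (sin t1)), <- cos_minus in H.
  replace (t1 + PI / 4 - t1) with (PI / 4) in H by ring. rewrite cos_PI4 in H.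
  assert (S2 : sqrt 2 * sqrt 2 = 2) by (apply sqrt_sqrt; lra).
  assert (0 < sqrt 2) by (apply sqrt_lt_R0; lra).
  assert (1 / sqrt 2 * (1 / sqrt 2) = 1 / 2) by (replace (1 / sqrt 2 * (1 / sqrt 2)) with (1 / (sqrt 2 * sqrt 2)) by (field; lra); rewrite S2; reflexivity).
  lra.
Qed.

Lemma sq_convex (A B : pt) lam : 0 <= lam <= 1 ->
  dot (padd (pscale (1 - lam) A) (pscale lam B)) (padd (pscale (1 - lam) A) (pscale lam B)) <=
  (1 - lam) * dot A A + lam * dot B B.
Proof.
  intros Hl. assert (E : (1 - lam) * dot A A + lam * dot B B -
     dot (padd (pscale (1 - lam) A) (pscale lam B)) (padd (pscale (1 - lam) A) (pscale lam B)) =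
     lam * (1 - lam) * dot (psub A B) (psub A B)) by (unfold dot, psub, padd, pscale; simpl; ring).
  assert (0 <= dot (psub A B) (psub A B)) by (unfold dot; pose proof (Rle_0_sqr (fst (psub A B))); pose proof (Rle_0_sqr (snd (psub A B))); unfold Rsqr in *; lra).
  assert (0 <= lam * (1 - lam)) by nra. nra.
Qed.

Lemma deg_same z u nu r : boundary K z -> dot u u = 1 -> 0 < r ->
  (forall s, 0 <= s < r -> K (padd z (pscale s u))) ->
  outer_normal K z nu -> dot nu u = 0 ->
  (forall p, boundary K p -> dist p z < r -> exists s, 0 <= s /\ p = padd z (pscale s u)) -> False.
Proof.
  intros Bz Uu Hr KR Nnu Hnu Hray.
  destruct (Kball K HK) as (c & rc & Hrc & Hbc).
  assert (Kc : K c) by (apply Hbc; rewrite dot_psub_self; nra).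
  set (y := padd z (pscale (- (r / 2)) u)).
  assert (Dy : dot (psub y z) (psub y z) = r / 2 * (r / 2)).
  { unfold y. replace (dot (psub (padd z (pscale (- (r / 2)) u)) z) (psub (padd z (pscale (- (r / 2)) u)) z))
      with (r / 2 * (r / 2) * dot u u) by (unfold dot, psub, padd, pscale; simpl; ring). rewrite Uu; ring. }
  assert (Hdy : dist y z < r) by (apply dist_lt; auto; rewrite Dy; nra).
  destruct (classic (K y)) as [Ky|Ky].
  - assert (Iy : interior K y).
    { apply NNPP; intro Hni. destruct (Hray y (conj Ky Hni) Hdy) as (s & Hs & Ey).
      unfold y in Ey. injection Ey as Ey1 Ey2. unfold dot in Uu.
      assert ((s + r / 2) * fst u = 0) by lra. assert ((s + r / 2) * snd u = 0) by lra.
      apply Rmult_integral in H. apply Rmult_integral in H0.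
      destruct H as [H|H]; [lra|]. destruct H0 as [H0|H0]; [lra|]. rewrite H, H0 in Uu. lra. }
    destruct Iy as (r0 & Hr0 & Hb0).
    apply (proj2 Bz). apply (interior_seg K HK y r0 (padd z (pscale (r / 2) u)) (1/2)); auto.
    + intros q Hq. apply Hb0. apply dist_lt; auto.
    + apply KR; lra.
    + lra.
    + unfold y; simpl; field.
    + unfold y; simpl; field.
  - set (D := dot (psub c z) (psub c z)).
    assert (HD : 0 <= D) by (unfold D, dot; pose proof (Rle_0_sqr (fst (psub c z))); pose proof (Rle_0_sqr (snd (psub c z))); unfold Rsqr in *; lra).
    set (tau := Rmin 1 (r / (4 * (D + 1)))).
    assert (Htau : 0 < tau) by (unfold tau; apply Rmin_glb_lt; [lra|apply Rdiv_lt_0_compat; lra]).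
    assert (Htau1 : tau <= 1) by apply Rmin_l.
    assert (Htau2 : tau * (D + 1) <= r / 4).
    { assert (tau <= r / (4 * (D + 1))) by apply Rmin_r.
      apply (Rmult_le_compat_r (D + 1)) in H; [|lra].
      replace (r / (4 * (D + 1)) * (D + 1)) with (r / 4) in H by (field; lra). auto. }
    set (w := padd z (pscale tau (psub c z))).
    assert (Kw : K w) by (apply (Kconv K HK z c tau); [apply Bz|exact Kc|lra|unfold w; simpl; ring|unfold w; simpl; ring]).
    assert (Dw : dot (psub w z) (psub w z) <= r / 4 * (r / 4)).
    { replace (dot (psub w z) (psub w z)) with (tau * tau * D) by (unfold w, D, dot, psub, padd, pscale; simpl; ring).
      assert (tau * tau * D <= (tau * (D + 1)) * (tau * (D + 1))) by nra.
      assert (0 <= tau * (D + 1)) by nra. nra. }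
    set (d := psub w y).
    assert (Hd : dot d d > 0).
    { unfold d, dot. cbn [psub fst snd].
      pose proof (Rle_0_sqr (fst w - fst y)) as Q1; pose proof (Rle_0_sqr (snd w - snd y)) as Q2; unfold Rsqr in *.
      destruct (Req_dec (fst w) (fst y)); destruct (Req_dec (snd w) (snd y)).
      - exfalso. apply Ky. replace y with w; auto. apply pt_eq; auto.
      - assert (0 < (snd w - snd y) * (snd w - snd y)) by (apply Rsqr_pos_lt; lra). lra.
      - assert (0 < (fst w - fst y) * (fst w - fst y)) by (apply Rsqr_pos_lt; lra). lra.
      - assert (0 < (fst w - fst y) * (fst w - fst y)) by (apply Rsqr_pos_lt; lra). lra. }
    assert (Ew : padd y (pscale 1 d) = w) by (unfold d; apply pt_eq; simpl; ring).
    destruct (line_min K HK y d Hd) as (X0 & Kb & Hmin & Bb).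
    { exists 1. rewrite Ew; auto. }
    { apply (line_lower K HK); auto. }
    assert (HX1 : X0 <= 1) by (apply Hmin; rewrite Ew; auto).
    assert (HX0 : 0 < X0).
    { destruct (Rlt_dec 0 X0) as [|Hn]; auto. exfalso. apply Ky.
      destruct (Req_dec X0 0) as [E|E].
      - replace y with (padd y (pscale X0 d)); auto. rewrite E. apply pt_eq; simpl; ring.
      - apply (Kconv K HK (padd y (pscale X0 d)) w (- X0 / (1 - X0))); auto.
        + split. apply Rmult_le_pos; [lra|apply Rlt_le, Rinv_0_lt_compat; lra].
          apply (Rmult_le_reg_r (1 - X0)); [lra|]. unfold Rdiv. rewrite Rmult_assoc, Rinv_l; lra.
        + unfold d; simpl. field. lra.
        + unfold d; simpl. field. lra. }
    set (b := padd y (pscale X0 d)) in *.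
    assert (Eb : psub b z = padd (pscale (1 - X0) (psub y z)) (pscale X0 (psub w z)))
      by (unfold b, d; apply pt_eq; simpl; ring).
    assert (Hbz : dist b z < r).
    { apply dist_lt; auto. rewrite Eb. pose proof (sq_convex (psub y z) (psub w z) X0 ltac:(lra)).
      rewrite Dy in H. nra. }
    destruct (Hray b Bb Hbz) as (s & Hs & Es).
    assert (C1 : dot (psub b z) nu = s * dot nu u).
    { rewrite Es. unfold dot, psub, padd, pscale; simpl; ring. }
    rewrite Hnu in C1.
    assert (C2 : dot (psub b z) nu = X0 * tau * dot (psub c z) nu).
    { rewrite Eb. replace (dot (padd (pscale (1 - X0) (psub y z)) (pscale X0 (psub w z))) nu) with
        ((1 - X0) * (- (r / 2)) * dot nu u + X0 * tau * dot (psub c z) nu)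
        by (unfold y, w, dot, psub, padd, pscale; simpl; ring). rewrite Hnu. ring. }
    pose proof (normal_strict K z nu c rc Nnu Hrc Hbc).
    assert (0 < X0 * tau) by nra. nra.
Qed.

End Part3b.

Section Part3c.
Variable K : pt -> Prop.
Hypothesis HK : convex_domain K.

Lemma LB z : boundary K z -> Omega K z = PI / 2 -> two_segment_vertex K z ->
  exists rho c0, 0 < rho /\ 0 < c0 /\ forall p, boundary K p -> dot (psub p z) (psub p z) < rho * rho ->
    c0 <= local_depth K p.
Proof.
  intros Bz HO (r & u & v & Hr & Nu & Nv & Hbd). apply pnorm1 in Nu. apply pnorm1 in Nv.
  assert (Dl : forall w s, dot w w = 1 -> dot (psub (padd z (pscale s w)) z) (psub (padd z (pscale s w)) z) = s * s).
  { intros w s Hw. replace (dot (psub (padd z (pscale s w)) z) (psub (padd z (pscale s w)) z)) with (s * s * dot w w)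
      by (unfold dot, psub, padd, pscale; simpl; ring). rewrite Hw; ring. }
  assert (RBu : forall s, 0 <= s < r -> boundary K (padd z (pscale s u))).
  { intros s Hs. apply Hbd. apply dist_lt; auto. rewrite Dl; auto; nra. exists s; split; [lra|left; auto]. }
  assert (RBv : forall s, 0 <= s < r -> boundary K (padd z (pscale s v))).
  { intros s Hs. apply Hbd. apply dist_lt; auto. rewrite Dl; auto; nra. exists s; split; [lra|right; auto]. }
  assert (PN : forall w, dot w w = 1 -> (forall s, 0 <= s < r -> boundary K (padd z (pscale s w))) ->
     exists nu, outer_normal K z nu /\ dot nu w = 0).
  { intros w Hw RB. destruct (normal_exists K HK _ (RB (r / 4) ltac:(lra))) as [nu [Nn Hn]].
    assert (K1 : K z) by apply Bz. assert (K2 : K (padd z (pscale (r / 2) w))) by (apply (RB (r/2)); lra).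
    pose proof (Hn _ K1) as A1. pose proof (Hn _ K2) as A2.
    replace (dot (psub z (padd z (pscale (r / 4) w))) nu) with (- (r / 4) * dot nu w) in A1
      by (unfold dot, psub, padd, pscale; simpl; ring).
    replace (dot (psub (padd z (pscale (r / 2) w)) (padd z (pscale (r / 4) w))) nu) with ((r / 4) * dot nu w) in A2
      by (unfold dot, psub, padd, pscale; simpl; field).
    assert (E : dot nu w = 0) by nra.
    exists nu. split; auto. split; auto. intros y Ky. specialize (Hn y Ky).
    replace (dot (psub y z) nu) with (dot (psub y (padd z (pscale (r / 4) w))) nu + (r / 4) * dot nu w)
      by (unfold dot, psub, padd, pscale; simpl; ring). rewrite E. lra. }
  destruct (PN u Nu RBu) as (nu & Nnu & Hnu).
  destruct (PN v Nv RBv) as (mu & Nmu & Hmu).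
  assert (Unu : dot nu nu = 1) by (apply pnorm1; apply Nnu).
  assert (Umu : dot mu mu = 1) by (apply pnorm1; apply Nmu).
  set (g := dot u v).
  destruct (unit_dot_bound u v Nu Nv) as [Hg1 Hg2]. fold g in Hg1, Hg2.
  set (R := r / 2). assert (HR : 0 < R) by (unfold R; lra).
  assert (KRu : K (padd z (pscale R u))) by (apply (RBu R); unfold R; lra).
  assert (KRv : K (padd z (pscale R v))) by (apply (RBv R); unfold R; lra).
  destruct (Rlt_dec (g * g) 1) as [Hgg|Hgg].
  - assert (Hnv : dot nu v < 0).
    { destruct Nnu as [_ Hn]. pose proof (Hn _ KRv) as A.
      replace (dot (psub (padd z (pscale R v)) z) nu) with (R * dot nu v) in A by (unfold dot, psub, padd, pscale; simpl; ring).
      destruct (Req_dec (dot nu v) 0) as [E|E].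
      - exfalso. pose proof (two_unit_perp nu u v Unu Nu Nv Hnu E). fold g in H. lra.
      - assert (dot nu v <= 0) by nra. lra. }
    assert (Hmuu : dot mu u < 0).
    { destruct Nmu as [_ Hn]. pose proof (Hn _ KRu) as A.
      replace (dot (psub (padd z (pscale R u)) z) mu) with (R * dot mu u) in A by (unfold dot, psub, padd, pscale; simpl; ring).
      destruct (Req_dec (dot mu u) 0) as [E|E].
      - exfalso. pose proof (two_unit_perp mu v u Umu Nv Nu Hmu E). rewrite dot_comm in H. fold g in H. lra.
      - assert (dot mu u <= 0) by nra. lra. }
    assert (Hg0 : g <= 0).
    { apply Rnot_lt_le; intro Hgp.
      destruct (orth_perp nu u Unu Nu Hnu) as (sg & Hsg & Eu).
      assert (Par : forall x y, dot x y = dot x u * dot y u + dot x nu * dot y nu).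
      { intros x y. rewrite Eu. apply parseval; auto. }
      set (a := dot mu u). set (bb := dot mu nu). set (c' := dot v nu).
      assert (E1 : a * g + bb * c' = 0).
      { unfold a, bb, c', g. rewrite (dot_comm u v). rewrite <- Par. rewrite dot_comm; auto. rewrite dot_comm; auto. }
      assert (E2 : a * a + bb * bb = 1) by (unfold a, bb; rewrite <- Par; auto).
      assert (E3 : g * g + c' * c' = 1) by (unfold g, c'; rewrite (dot_comm u v), <- Par; auto).
      assert (Ha : a < 0) by (unfold a; auto).
      assert (Hc : c' < 0) by (unfold c'; rewrite dot_comm; auto).
      assert (F0 : a * g = - (bb * c')) by lra.
      assert (F1 : a * a * (g * g) = bb * bb * (c' * c')).
      { transitivity ((a * g) * (a * g)); [ring|]. rewrite F0; ring. }
      replace (bb * bb) with (1 - a * a) in F1 by lra. replace (c' * c') with (1 - g * g) in F1 by lra.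
      assert (F2 : a * a + g * g = 1) by nra.
      assert (F3 : a = c').
      { assert ((a - c') * (a + c') = 0) by nra. apply Rmult_integral in H. destruct H; lra. }
      assert (F4 : bb = - g).
      { subst a. assert (c' * (g + bb) = 0) by (rewrite <- F3 at 1; nra). apply Rmult_integral in H. destruct H; lra. }
      assert (Hd : dot nu mu = - g) by (rewrite dot_comm; exact F4).
      pose proof (arc_normals K HK z nu mu Nnu Nmu ltac:(lra)).
      pose proof (acos_gt_half (dot nu mu) ltac:(lra)). lra. }
    exists (r / 4), (R * (1 + g) / 2). split; [lra|]. split; [unfold R; nra|].
    intros p Bp Hp. assert (Hpd : dist p z < r) by (apply dist_lt; auto; nra).
    destruct (Hbd p Hpd) as [H1 _]. destruct (H1 Bp) as (s & Hs & [Ep|Ep]); rewrite Ep in Hp |- *; rewrite Dl in Hp; auto.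
    + apply (chord_lb K HK z u v nu R s); auto; [apply Bz| unfold R; nra].
    + replace g with (dot v u) by (unfold g; apply dot_comm).
      apply (chord_lb K HK z v u mu R s); auto; try (rewrite dot_comm; fold g; lra); [apply Bz| unfold R; nra].
  - assert (Hg' : g = 1 \/ g = -1) by nra.
    destruct Hg' as [Hg'|Hg'].
    +
      assert (Q : (fst u - fst v) * (fst u - fst v) + (snd u - snd v) * (snd u - snd v) = 0).
      { unfold g, dot in *. nra. }
      assert (Q' : Rsqr (fst u - fst v) + Rsqr (snd u - snd v) = 0) by (unfold Rsqr; lra).
      apply Rplus_sqr_eq_0 in Q'. destruct Q' as [Q1 Q2].
      assert (Euv : v = u) by (apply pt_eq; lra).
      exfalso. apply (deg_same K HK z u nu r Bz Nu Hr); auto.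
      * intros s Hs. apply RBu; auto.
      * intros p Bp Hp. destruct (Hbd p Hp) as [H1 _]. destruct (H1 Bp) as (s & Hs & [Ep|Ep]); exists s; split; auto.
        rewrite Ep, Euv; auto.
    + exfalso.
      assert (Q : (fst u + fst v) * (fst u + fst v) + (snd u + snd v) * (snd u + snd v) = 0).
      { unfold g, dot in *. nra. }
      assert (Q' : Rsqr (fst u + fst v) + Rsqr (snd u + snd v) = 0) by (unfold Rsqr; lra).
      apply Rplus_sqr_eq_0 in Q'. destruct Q' as [Q1 Q2].
      apply (deg_opp K z u v R Nu HR); auto; lra.
Qed.

Lemma part3 : Omega_K K = PI / 2 ->
  (forall zeta, boundary K zeta -> Omega K zeta = PI / 2 -> two_segment_vertex K zeta) -> depth K > 0.
Proof.
  intros HO Hts. apply depth_pos; [apply boundary_exists; auto|].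
  apply NNPP; intro Hno. destruct (half_pi_point K HK Hno) as (z & Bz & Hz & Hseq).
  pose proof (Omega_le_OmegaK K HK z Bz).
  assert (HOz : Omega K z = PI / 2) by lra.
  destruct (LB z Bz HOz (Hts z Bz HOz)) as (rho & c0 & Hrho & Hc0 & Hlb).
  set (m := Rmin rho c0). assert (Hm : 0 < m) by (unfold m; apply Rmin_glb_lt; auto).
  destruct (Hseq m Hm) as (p & Bp & Hld & Hd).
  assert (m <= rho) by apply Rmin_l. assert (m <= c0) by apply Rmin_r.
  assert (dot (psub p z) (psub p z) < rho * rho) by nra.
  pose proof (Hlb p Bp H2). lra.
Qed.

End Part3c.


Theorem proposition1 (K : pt -> Prop) (HK : convex_domain K) :
  (Omega_K K < PI / 2 -> depth K > 0) /\
  ((exists zeta, boundary K zeta /\ Omega K zeta > PI / 2) -> depth K = 0) /\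
  (Omega_K K = PI / 2 ->
     (forall zeta, boundary K zeta -> Omega K zeta = PI / 2 ->
        two_segment_vertex K zeta) ->
     depth K > 0) /\
  (Omega_K K = PI / 2 ->
     (exists zeta, boundary K zeta /\ Omega K zeta = PI / 2 /\
        ~ two_segment_vertex K zeta) ->
     depth K = 0).
Proof.
  split; [apply part1; auto|].
  split; [intros (zeta & Bz & HO); apply (part2 K HK zeta); auto|].
  split; [intros HO Hts; apply part3; auto|].
  intros HO (zeta & Bz & HOz & Hnt). apply (part4 K HK zeta); auto.
Qed.
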